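(* Let $\kappa$ be an infinite cardinal and let $(\kappa^{\aleph_0},\mathcal U)$ be the countable power of the discrete uniform space of cardinality $\kappa$ (with the product uniformity). Then: (1) the completion $\widehat{F^b_{NA}}(\kappa^{\aleph_0},\mathcal U)$ is surjectively universal in the class of all balanced non-archimedean metrizable complete topological groups of weight $\le\kappa$; (2) the completion $\widehat{A_{NA}}(\kappa^{\aleph_0},\mathcal U)$ is surjectively universal in the class of all abelian non-archimedean metrizable complete topological groups of weight $\le\kappa$; (3) the completion $\widehat{B_{NA}}(\kappa^{\aleph_0},\mathcal U)$ is surjectively universal in the class of all Boolean non-archimedean metrizable complete topological groups of weight $\le\kappa$.
   Context: All groups are Hausdorff. A topological group is non-archimedean if it has a local base at the identity of open subgroups; balanced if its left and right uniformities coincide; Boolean if every non-identity element has order 2; complete if it is complete in its two-sided uniformity, and $\widehat G$ denotes the completion in the two-sided uniformity. For a class $\Omega$ of topological groups and a uniform space $(X,\mathcal U)$, $F_\Omega(X,\mathcal U)$ denotes the group $F\in\Omega$ together with a uniformly continuous $i\colon X\to F$ (two-sided uniformity) such that every uniformly continuous map from $X$ to a group in $\Omega$ factors uniquely as a continuous homomorphism composed with $i$. $F^b_{NA}$, $A_{NA}$, $B_{NA}$ are these for $\Omega$ = balanced, abelian, Boolean non-archimedean groups respectively. A group $G$ is surjectively universal in a class $\Omega$ if $G\in\Omega$ and every $H\in\Omega$ is topologically isomorphic to a topological quotient group of $G$. *)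

(* Defs.v *)
From Stdlib Require Import Reals List.
Open Scope R_scope.

Set Implicit Arguments.

Record TopGroup := {
  carrier :> Type;
  gmul : carrier -> carrier -> carrier;
  ginv : carrier -> carrier;
  gone : carrier;
  gopen : (carrier -> Prop) -> Prop
}.

Arguments gmul {t}.
Arguments ginv {t}.
Arguments gone {t}.
Arguments gopen {t}.

Section TG.
Variable G : TopGroup.
Local Notation "x * y" := (gmul x y).
Local Notation "x ^-1" := (ginv x) (at level 3).
Local Notation e := (@gone G).

Definition is_group : Prop :=
  (forall x y z : G, x * (y * z) = (x * y) * z) /\
  (forall x : G, e * x = x /\ x * e = x) /\
  (forall x : G, x^-1 * x = e /\ x * x^-1 = e).

Definition is_topology : Prop :=
  gopen (fun _ : G => True) /\
  (forall U V : G -> Prop, gopen U -> gopen V -> gopen (fun x => U x /\ V x)) /\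
  (forall (I : Type) (U : I -> G -> Prop), (forall i, gopen (U i)) ->
     gopen (fun x => exists i, U i x)).

Definition hausdorff : Prop :=
  forall x y : G, x <> y -> exists U V : G -> Prop,
    gopen U /\ gopen V /\ U x /\ V y /\ forall z, U z -> V z -> False.

Definition mul_continuous : Prop :=
  forall (W : G -> Prop) (x y : G), gopen W -> W (x * y) ->
    exists U V : G -> Prop, gopen U /\ gopen V /\ U x /\ V y /\
      forall a b, U a -> V b -> W (a * b).

Definition inv_continuous : Prop :=
  forall W : G -> Prop, gopen W -> gopen (fun x => W (x^-1)).

Definition is_topgroup : Prop :=
  is_group /\ is_topology /\ hausdorff /\ mul_continuous /\ inv_continuous.

Definition nbhd_e (N : G -> Prop) : Prop :=
  exists U, gopen U /\ U e /\ forall x, U x -> N x.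

Definition is_subgroup (H : G -> Prop) : Prop :=
  H e /\ (forall x y, H x -> H y -> H (x * y)) /\ (forall x, H x -> H (x^-1)).

Definition non_archimedean : Prop :=
  forall N, nbhd_e N -> exists H, gopen H /\ is_subgroup H /\ forall x, H x -> N x.

Definition ent_left (V : G -> Prop) (x y : G) : Prop := V (x^-1 * y).
Definition ent_right (V : G -> Prop) (x y : G) : Prop := V (y * x^-1).
Definition ent_two (V : G -> Prop) (x y : G) : Prop := ent_left V x y /\ ent_right V x y.

Definition balanced : Prop :=
  (forall V, nbhd_e V -> exists W, nbhd_e W /\
      forall x y, ent_left W x y -> ent_right V x y) /\
  (forall V, nbhd_e V -> exists W, nbhd_e W /\
      forall x y, ent_right W x y -> ent_left V x y).

Definition abelian : Prop := forall x y : G, x * y = y * x.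

Definition boolean : Prop := forall x : G, x <> e -> x * x = e.

Definition metrizable : Prop :=
  exists d : G -> G -> R,
    (forall x y, 0 <= d x y) /\ (forall x y, d x y = 0 <-> x = y) /\
    (forall x y, d x y = d y x) /\ (forall x y z, d x z <= d x y + d y z) /\
    (forall U, gopen U <-> forall x, U x -> exists eps, 0 < eps /\
        forall y, d x y < eps -> U y).

Definition proper_filter (F : (G -> Prop) -> Prop) : Prop :=
  F (fun _ => True) /\ ~ F (fun _ => False) /\
  (forall A B, F A -> F B -> F (fun x => A x /\ B x)) /\
  (forall A B : G -> Prop, (forall x, A x -> B x) -> F A -> F B).

Definition cauchy_filter (F : (G -> Prop) -> Prop) : Prop :=
  forall V, nbhd_e V -> exists A, F A /\ forall x y, A x -> A y -> ent_two V x y.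

Definition filter_converges (F : (G -> Prop) -> Prop) (x : G) : Prop :=
  forall U, gopen U -> U x -> F U.

Definition complete : Prop :=
  forall F, proper_filter F -> cauchy_filter F -> exists x, filter_converges F x.

Definition weight_le (K : Type) : Prop :=
  exists B : K -> G -> Prop, (forall k, gopen (B k)) /\
    forall U x, gopen U -> U x -> exists k, B k x /\ forall y, B k y -> U y.

End TG.

Arguments nbhd_e {G}.
Arguments is_subgroup {G}.
Arguments ent_left {G}.
Arguments ent_right {G}.
Arguments ent_two {G}.
Arguments proper_filter {G}.
Arguments cauchy_filter {G}.
Arguments filter_converges {G}.

Definition continuous_map {G H : TopGroup} (f : G -> H) : Prop :=
  forall W : H -> Prop, gopen W -> gopen (fun x => W (f x)).

Definition open_map {G H : TopGroup} (f : G -> H) : Prop :=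
  forall U : G -> Prop, gopen U -> gopen (fun y => exists x, U x /\ f x = y).

Definition homomorphism {G H : TopGroup} (f : G -> H) : Prop :=
  forall x y : G, f (gmul x y) = gmul (f x) (f y).

(* H is topologically isomorphic to a topological quotient group of G,
   i.e. there is an open continuous surjective homomorphism G -> H *)
Definition quotient_of (G H : TopGroup) : Prop :=
  exists f : G -> H, homomorphism f /\ continuous_map f /\ open_map f /\
    forall y, exists x, f x = y.

Definition surjectively_universal (Omega : TopGroup -> Prop) (G : TopGroup) : Prop :=
  Omega G /\ forall H, Omega H -> quotient_of G H.

(* The uniform space kappa^aleph_0 : countable power of the discrete uniform
   space K, with the product uniformity; basic entourages are
   {(x,y) | x i = y i for i < n}. *)
Definition unif_cont_from_power {K : Type} {G : TopGroup} (f : (nat -> K) -> G) : Prop :=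
  forall V, nbhd_e V -> exists n : nat, forall x y : nat -> K,
    (forall i, (i < n)%nat -> x i = y i) -> ent_two V (f x) (f y).

Definition is_free_over_power (Omega : TopGroup -> Prop) (K : Type)
    {F : TopGroup} (i : (nat -> K) -> F) : Prop :=
  Omega F /\ unif_cont_from_power i /\
  forall (H : TopGroup) (f : (nat -> K) -> H), Omega H -> unif_cont_from_power f ->
    (exists phi : F -> H, homomorphism phi /\ continuous_map phi /\
        forall x, phi (i x) = f x) /\
    (forall phi psi : F -> H, homomorphism phi -> continuous_map phi ->
        homomorphism psi -> continuous_map psi ->
        (forall x, phi (i x) = f x) -> (forall x, psi (i x) = f x) ->
        forall z, phi z = psi z).

(* (Gh, j) is the completion of G in its two-sided uniformity: Gh is a complete
   topological group and j a topological group embedding with dense image. *)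
Definition is_completion (G Gh : TopGroup) (j : G -> Gh) : Prop :=
  is_topgroup Gh /\ complete Gh /\
  homomorphism j /\ continuous_map j /\ (forall x y, j x = j y -> x = y) /\
  (forall U : G -> Prop, gopen U -> exists W : Gh -> Prop, gopen W /\
     forall x, U x <-> W (j x)) /\
  (forall W : Gh -> Prop, gopen W -> (exists z, W z) -> exists x, W (j x)).

Definition infinite_type (K : Type) : Prop := ~ exists l : list K, forall x, In x l.

Definition balanced_NA (G : TopGroup) : Prop :=
  is_topgroup G /\ non_archimedean G /\ balanced G.
Definition abelian_NA (G : TopGroup) : Prop :=
  is_topgroup G /\ non_archimedean G /\ abelian G.
Definition boolean_NA (G : TopGroup) : Prop :=
  is_topgroup G /\ non_archimedean G /\ boolean G.

Definition metr_complete_weight (K : Type) (G : TopGroup) : Prop :=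
  metrizable G /\ complete G /\ weight_le G K.

(* Main.v *)
Require Import Defs.
From Stdlib Require Import Classical ClassicalEpsilon FunctionalExtensionality PropExtensionality ProofIrrelevance Lia List Reals Lra.
From Stdlib Require Cantor.
From mathcomp Require boolp classical_sets.
Local Open Scope nat_scope.

Lemma zorn_pre (T:Type) (t0:T) (R: T -> T -> Prop) :
  (forall t, R t t) -> (forall r s t, R r s -> R s t -> R r t) ->
  (forall A : T -> Prop, (forall s t, A s -> A t -> R s t \/ R t s) ->
     exists t, forall s, A s -> R s t) ->
  exists t, forall s, R t s -> R s t.
Proof.
  intros Hr Ht Hc.
  destruct (@classical_sets.ZL_preorder T t0 (fun a b => boolp.asbool (R a b))) as [t Ht'].
  - intros; apply boolp.asboolT; auto.
  - intros r s t H1 H2; apply boolp.asboolT; apply boolp.asboolW in H1; apply boolp.asboolW in H2; eauto.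
  - intros A HA. destruct (Hc A) as [t HtA].
    + intros s t Hs Htt. destruct (HA s t Hs Htt) as [H|H]; apply boolp.asboolW in H; auto.
    + exists t; intros; apply boolp.asboolT; auto.
  - exists t. intros s Hs. apply boolp.asboolW. apply Ht'. apply boolp.asboolT; auto.
Qed.

Definition eps {T} (t0 : T) (P : T -> Prop) : T := epsilon (inhabits t0) P.
Lemma eps_spec {T} (t0 : T) (P : T -> Prop) : (exists x, P x) -> P (eps t0 P).
Proof. intros H; unfold eps; apply epsilon_spec; auto. Qed.

Section Comp.
Variables (X Y : Type) (x0 : X) (y0 : Y) (A : X -> Prop) (B : Y -> Prop).

Record PInj := { pD : X -> Prop; ph : X -> Y;
  pDA : forall a, pD a -> A a; phB : forall a, pD a -> B (ph a);
  phI : forall a a', pD a -> pD a' -> ph a = ph a' -> a = a' }.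

Definition ple (s t : PInj) := (forall a, pD s a -> pD t a) /\ (forall a, pD s a -> ph s a = ph t a).

Lemma comparability :
  (exists h : X -> Y, (forall a, A a -> B (h a)) /\ (forall a a', A a -> A a' -> h a = h a' -> a = a')) \/
  (exists g : Y -> X, (forall b, B b -> A (g b)) /\ (forall b b', B b -> B b' -> g b = g b' -> b = b')).
Proof.
  assert (t0 : PInj).
  { refine {| pD := fun _ => False; ph := fun _ => y0 |}; intros; contradiction. }
  destruct (@zorn_pre PInj t0 ple) as [t Hmax].
  - intros t; split; auto.
  - intros r s t [H1 H2] [H3 H4]; split; auto. intros a Ha; rewrite H2 by auto; auto.
  - intros C HC.
    set (D := fun a => exists s, C s /\ pD s a).
    set (h := fun a => ph (eps t0 (fun s => C s /\ pD s a)) a).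
    assert (Hh : forall s a, C s -> pD s a -> h a = ph s a).
    { intros s a Cs Ds. unfold h. set (s' := eps _ _).
      assert (Hs' : C s' /\ pD s' a) by (apply eps_spec; eauto).
      destruct Hs' as [Cs' Ds']. destruct (HC s s' Cs Cs') as [[H1 H2]|[H1 H2]]; auto.
      symmetry; auto. }
    assert (DA : forall a, D a -> A a) by (intros a [s [_ Ds]]; eapply pDA; eauto).
    assert (hB : forall a, D a -> B (h a)) by (intros a [s [Cs Ds]]; rewrite (Hh s a Cs Ds); eapply phB; eauto).
    assert (hI : forall a a', D a -> D a' -> h a = h a' -> a = a').
    { intros a a' [s [Cs Ds]] [s' [Cs' Ds']] E.
      rewrite (Hh s a Cs Ds), (Hh s' a' Cs' Ds') in E.
      destruct (HC s s' Cs Cs') as [[H1 H2]|[H1 H2]].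
      - rewrite (H2 a Ds) in E. apply (phI s' a a'); auto.
      - rewrite (H2 a' Ds') in E. apply (phI s a a'); auto. }
    exists {| pD := D; ph := h; pDA := DA; phB := hB; phI := hI |}.
    intros s Cs; split; simpl.
    + intros a Ds; exists s; auto.
    + intros a Ds; symmetry; apply Hh; auto.
  - destruct (classic (forall a, A a -> pD t a)) as [HA|HA].
    + left; exists (ph t); split.
      * intros a Aa; apply phB; auto.
      * intros; eapply phI; eauto.
    + destruct (classic (forall b, B b -> exists a, pD t a /\ ph t a = b)) as [HB|HB].
      * right. exists (fun b => eps x0 (fun a => pD t a /\ ph t a = b)). split.
        -- intros b Bb. destruct (eps_spec x0 (fun a => pD t a /\ ph t a = b) (HB b Bb)) as [H1 H2].
           apply (pDA t); auto.
        -- intros b b' Bb Bb' E.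
           destruct (eps_spec x0 (fun a => pD t a /\ ph t a = b) (HB b Bb)) as [H1 H2].
           destruct (eps_spec x0 (fun a => pD t a /\ ph t a = b') (HB b' Bb')) as [H3 H4].
           rewrite <- H2, <- H4, E; auto.
      * exfalso.
        apply not_all_ex_not in HA; destruct HA as [a Ha].
        apply imply_to_and in Ha; destruct Ha as [Aa Da].
        apply not_all_ex_not in HB; destruct HB as [b Hb].
        apply imply_to_and in Hb; destruct Hb as [Bb Hb].
        set (D' := fun x => pD t x \/ x = a).
        set (h' := fun x => match excluded_middle_informative (x = a) with left _ => b | right _ => ph t x end).
        assert (D'A : forall x, D' x -> A x).
        { intros x [Dx|Ex]. apply (pDA t); auto. subst; auto. }
        assert (h'B : forall x, D' x -> B (h' x)).
        { intros x Hx; unfold h'; destruct excluded_middle_informative as [ex|nx].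
          - exact Bb.
          - destruct Hx as [Hx|Hx]; [apply phB; exact Hx| contradiction]. }
        assert (h'I : forall x x', D' x -> D' x' -> h' x = h' x' -> x = x').
        { intros x x' Hx Hx'; unfold h'.
          destruct excluded_middle_informative as [ex|nx]; destruct excluded_middle_informative as [ex'|nx'].
          - intros; subst; reflexivity.
          - intros E. exfalso; apply Hb; exists x'. destruct Hx' as [Hx'|Hx']; [split; auto| contradiction].
          - intros E. exfalso; apply Hb; exists x. destruct Hx as [Hx|Hx]; [split; auto| contradiction].
          - intros E. destruct Hx as [Hx|Hx]; [|contradiction]. destruct Hx' as [Hx'|Hx']; [|contradiction].
            apply (phI t); auto. }
        set (t' := {| pD := D'; ph := h'; pDA := D'A; phB := h'B; phI := h'I |}).
        assert (le1 : ple t t').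
        { split; simpl.
          - intros x Dx; left; auto.
          - intros x Dx; unfold h'; destruct excluded_middle_informative as [ex|nx]; [subst; contradiction| reflexivity]. }
        destruct (Hmax t' le1) as [H1 _]. apply Da, H1. simpl. right; auto.
Qed.
End Comp.

Section Hessenberg.
Variables (K : Type) (nu : nat -> K) (nu_inj : forall m n, nu m = nu n -> m = n).

Definition nuinv (a : K) : nat := eps 0 (fun n => nu n = a).
Lemma nuinv_nu n : nuinv (nu n) = n.
Proof. unfold nuinv. apply nu_inj. apply (eps_spec 0 (fun m => nu m = nu n)). eauto. Qed.

Definition f0 (a b : K) : K := nu (Cantor.to_nat (nuinv a, nuinv b)).

Record HS := { hA : K -> Prop; hf : K -> K -> K; hnu : forall n, hA (nu n);
  hcl : forall a b, hA a -> hA b -> hA (hf a b);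
  hinj : forall a b a' b', hA a -> hA b -> hA a' -> hA b' -> hf a b = hf a' b' -> a = a' /\ b = b';
  hbase : forall m n, hf (nu m) (nu n) = f0 (nu m) (nu n) }.

Definition hle (s t : HS) := (forall a, hA s a -> hA t a) /\ (forall a b, hA s a -> hA s b -> hf s a b = hf t a b).

Definition t0 : HS.
Proof.
  refine {| hA := fun a => exists n, a = nu n; hf := f0 |}.
  - intros n; exists n; auto.
  - intros a b _ _; unfold f0; eauto.
  - intros a b a' b' [m ->] [n ->] [m' ->] [n' ->] E. unfold f0 in E.
    apply nu_inj in E. rewrite !nuinv_nu in E.
    apply (f_equal Cantor.of_nat) in E. rewrite !Cantor.cancel_of_to in E.
    inversion E; subst; auto.
  - reflexivity.
Defined.

Lemma chain_ub (C : HS -> Prop) : (forall s t, C s -> C t -> hle s t \/ hle t s) ->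
  exists t, forall s, C s -> hle s t.
Proof.
  intros HC. destruct (classic (exists s, C s)) as [[s0 Cs0]|NC].
  2:{ exists t0. intros s Cs; exfalso; eauto. }
  set (A := fun a => exists s, C s /\ hA s a).
  assert (both : forall a b, A a -> A b -> exists s, C s /\ hA s a /\ hA s b).
  { intros a b [s [Cs Ha]] [t [Ct Hb]]. destruct (HC s t Cs Ct) as [[H1 _]|[H1 _]].
    - exists t; auto. - exists s; auto. }
  set (f := fun a b => hf (eps t0 (fun s => C s /\ hA s a /\ hA s b)) a b).
  assert (Hf : forall s a b, C s -> hA s a -> hA s b -> f a b = hf s a b).
  { intros s a b Cs Ha Hb. unfold f. set (s' := eps _ _).
    assert (Hs' : C s' /\ hA s' a /\ hA s' b) by (apply eps_spec; eauto).
    destruct Hs' as [Cs' [Ha' Hb']]. destruct (HC s s' Cs Cs') as [[H1 H2]|[H1 H2]].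
    - symmetry; auto. - auto. }
  assert (Anu : forall n, A (nu n)) by (intros n; exists s0; split; auto; apply hnu).
  assert (Acl : forall a b, A a -> A b -> A (f a b)).
  { intros a b Ha Hb. destruct (both a b Ha Hb) as [s [Cs [Ha' Hb']]].
    rewrite (Hf s a b Cs Ha' Hb'). exists s; split; auto. apply hcl; auto. }
  assert (Ainj : forall a b a' b', A a -> A b -> A a' -> A b' -> f a b = f a' b' -> a = a' /\ b = b').
  { intros a b a' b' Ha Hb Ha' Hb' E.
    destruct (both a b Ha Hb) as [s [Cs [H1 H2]]].
    destruct (both a' b' Ha' Hb') as [s' [Cs' [H3 H4]]].
    rewrite (Hf s a b Cs H1 H2), (Hf s' a' b' Cs' H3 H4) in E.
    destruct (HC s s' Cs Cs') as [[L1 L2]|[L1 L2]].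
    - rewrite L2 in E by auto. apply (hinj s'); auto.
    - rewrite (L2 a' b') in E by auto. apply (hinj s); auto. }
  assert (Abase : forall m n, f (nu m) (nu n) = f0 (nu m) (nu n)).
  { intros m n. rewrite (Hf s0) by (auto; apply hnu). apply hbase. }
  exists {| hA := A; hf := f; hnu := Anu; hcl := Acl; hinj := Ainj; hbase := Abase |}.
  intros s Cs; split; simpl.
  - intros a Ha; exists s; auto.
  - intros a b Ha Hb; symmetry; apply Hf; auto.
Qed.

Lemma hessenberg : exists p : K -> K -> K, forall a b a' b', p a b = p a' b' -> a = a' /\ b = b'.
Proof.
  destruct (@zorn_pre HS t0 hle) as [t Hmax].
  - intros t; split; auto.
  - intros r s t [H1 H2] [H3 H4]; split; auto. intros a b Ha Hb; rewrite H2 by auto; auto.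
  - exact chain_ub.
  - destruct (comparability K K (nu 0) (nu 0) (hA t) (fun k => ~ hA t k)) as [[h [hB hI]]|[g [gA gI]]].
    + exfalso.
      set (A := hA t).
      set (A' := fun a => A a \/ exists a0, A a0 /\ a = h a0).
      set (pre := fun a => match excluded_middle_informative (A a) with left _ => a | right _ => eps (nu 0) (fun a0 => A a0 /\ h a0 = a) end).
      assert (pre_new : forall a, A' a -> ~ A a -> A (pre a) /\ h (pre a) = a).
      { intros a [Ha|[a0 [Ha0 ->]]] Na; [contradiction|].
        unfold pre; destruct excluded_middle_informative; [contradiction|].
        apply (eps_spec (nu 0) (fun x => A x /\ h x = h a0)); eauto. }
      assert (pre_old : forall a, A a -> pre a = a).
      { intros a Ha; unfold pre; destruct excluded_middle_informative; [auto|contradiction]. }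
      assert (preA : forall a, A' a -> A (pre a)).
      { intros a Ha. destruct (classic (A a)) as [Aa|Na]. rewrite pre_old; auto. apply pre_new; auto. }
      set (tg := fun a b => match excluded_middle_informative (A a) with left _ => 0 | right _ =>
                    match excluded_middle_informative (A b) with left _ => 1 | right _ => 2 end end).
      set (f := fun a b => match excluded_middle_informative (A a /\ A b) with left _ => hf t a b
                 | right _ => h (hf t (nu (tg a b)) (hf t (pre a) (pre b))) end).
      assert (fold : forall a b, A a -> A b -> f a b = hf t a b).
      { intros a b Ha Hb; unfold f; destruct excluded_middle_informative as [_|n]; [auto| exfalso; tauto]. }
      assert (fnew : forall a b, ~ (A a /\ A b) -> f a b = h (hf t (nu (tg a b)) (hf t (pre a) (pre b)))).
      { intros a b N; unfold f; destruct excluded_middle_informative as [y|_]; [contradiction|auto]. }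
      assert (Hnew : forall a b, A' a -> A' b -> A (hf t (nu (tg a b)) (hf t (pre a) (pre b)))).
      { intros; apply hcl; [apply hnu| apply hcl; apply preA; auto]. }
      assert (A'nu : forall n, A' (nu n)) by (intros; left; apply hnu).
      assert (A'cl : forall a b, A' a -> A' b -> A' (f a b)).
      { intros a b Ha Hb. destruct (classic (A a /\ A b)) as [[Aa Ab]|N].
        - rewrite fold by auto. left; apply hcl; auto.
        - rewrite fnew by auto. right; exists (hf t (nu (tg a b)) (hf t (pre a) (pre b))); split; [apply Hnew; auto| reflexivity]. }
      assert (tg0 : forall a b, A a -> tg a b = 0).
      { intros a b Ha; unfold tg; destruct excluded_middle_informative; [auto|contradiction]. }
      assert (tg1 : forall a b, ~ A a -> A b -> tg a b = 1).
      { intros a b Na Hb; unfold tg; destruct excluded_middle_informative; [contradiction|].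
        destruct excluded_middle_informative; [auto|contradiction]. }
      assert (tg2 : forall a b, ~ A a -> ~ A b -> tg a b = 2).
      { intros a b Na Nb; unfold tg; destruct excluded_middle_informative; [contradiction|].
        destruct excluded_middle_informative; [contradiction|auto]. }
      assert (recov : forall a a', A' a -> A' a' -> (A a <-> A a') -> pre a = pre a' -> a = a').
      { intros a a' Ha Ha' Iff E. destruct (classic (A a)) as [Aa|Na].
        - assert (A a') by tauto. rewrite !pre_old in E; auto.
        - assert (~ A a') by tauto. destruct (pre_new a Ha Na) as [_ E1]. destruct (pre_new a' Ha' H) as [_ E2].
          rewrite <- E1, <- E2, E; auto. }
      assert (A'inj : forall a b a' b', A' a -> A' b -> A' a' -> A' b' -> f a b = f a' b' -> a = a' /\ b = b').
      { intros a b a' b' Ha Hb Ha' Hb' E.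
        destruct (classic (A a /\ A b)) as [[Aa Ab]|N]; destruct (classic (A a' /\ A b')) as [[Aa' Ab']|N'].
        - rewrite !fold in E by auto. apply (hinj t); auto.
        - rewrite fold in E by auto. rewrite fnew in E by auto. exfalso.
          apply (hB _ (Hnew a' b' Ha' Hb')). rewrite <- E. apply hcl; auto.
        - rewrite fnew in E by auto. rewrite fold in E by auto. exfalso.
          apply (hB _ (Hnew a b Ha Hb)). rewrite E. apply hcl; auto.
        - rewrite !fnew in E by auto. apply hI in E; try (apply Hnew; auto).
          destruct (hinj t _ _ _ _ (hnu t _) (hcl t _ _ (preA a Ha) (preA b Hb)) (hnu t _) (hcl t _ _ (preA a' Ha') (preA b' Hb')) E) as [E1 E2].
          apply nu_inj in E1.
          destruct (hinj t _ _ _ _ (preA a Ha) (preA b Hb) (preA a' Ha') (preA b' Hb') E2) as [E3 E4].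
          assert (Ia : (A a <-> A a') /\ (A b <-> A b')).
          { destruct (classic (A a)) as [Aa|Na]; destruct (classic (A a')) as [Aa'|Na'];
            destruct (classic (A b)) as [Ab|Nb]; destruct (classic (A b')) as [Ab'|Nb'];
            try tauto;
            repeat match goal with
            | H1 : A ?x, E : context[tg ?x ?y] |- _ => rewrite (tg0 x y H1) in E
            | H1 : ~ A ?x, H2 : A ?y, E : context[tg ?x ?y] |- _ => rewrite (tg1 x y H1 H2) in E
            | H1 : ~ A ?x, H2 : ~ A ?y, E : context[tg ?x ?y] |- _ => rewrite (tg2 x y H1 H2) in E
            end; discriminate. }
          destruct Ia as [Ia Ib]. split; apply recov; auto. }
      assert (A'base : forall m n, f (nu m) (nu n) = f0 (nu m) (nu n)).
      { intros m n. rewrite fold by apply hnu. apply hbase. }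
      set (t' := {| hA := A'; hf := f; hnu := A'nu; hcl := A'cl; hinj := A'inj; hbase := A'base |}).
      assert (le1 : hle t t').
      { split; simpl. intros a Ha; left; auto. intros a b Ha Hb; symmetry; apply fold; auto. }
      destruct (Hmax t' le1) as [H1 _].
      apply (hB (nu 0) (hnu t 0)). apply H1. simpl. right. exists (nu 0); split; auto. apply hnu.
    + set (A := hA t).
      set (q := fun k => match excluded_middle_informative (A k) with left _ => hf t (nu 0) k | right _ => hf t (nu 1) (g k) end).
      assert (qA : forall k, A (q k)).
      { intros k; unfold q; destruct excluded_middle_informative as [Ak|Nk]; apply hcl; auto; apply hnu. }
      assert (qI : forall k k', q k = q k' -> k = k').
      { intros k k'; unfold q; destruct excluded_middle_informative as [Ak|Nk]; destruct excluded_middle_informative as [Ak'|Nk']; intros E.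
        - apply (hinj t) in E; try apply hnu; auto. tauto.
        - apply (hinj t) in E; try apply hnu; auto. destruct E as [E _]; apply nu_inj in E; discriminate.
        - apply (hinj t) in E; try apply hnu; auto. destruct E as [E _]; apply nu_inj in E; discriminate.
        - apply (hinj t) in E; try apply hnu; auto. destruct E as [_ E]. apply gI; auto. }
      exists (fun a b => hf t (q a) (q b)). intros a b a' b' E.
      apply (hinj t) in E; try apply qA. destruct E; split; apply qI; auto.
Qed.
End Hessenberg.

Lemma infinite_nu (K : Type) : (~ exists l : list K, forall x, In x l) ->
  exists nu : nat -> K, forall m n, nu m = nu n -> m = n.
Proof.
  intros HK. destruct (classic (inhabited K)) as [[k0]|NK].
  2:{ exfalso; apply HK; exists nil; intros x; apply NK; constructor; auto. }
  set (new := fun l : list K => eps k0 (fun k => ~ In k l)).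
  assert (Hnew : forall l, ~ In (new l) l).
  { intros l. apply (eps_spec k0 (fun k => ~ In k l)). apply not_all_ex_not. intros H; apply HK; exists l; exact H. }
  set (L := fix L n := match n with 0 => nil | S n => L n ++ new (L n) :: nil end).
  exists (fun n => new (L n)).
  assert (HL : forall m n, m < n -> In (new (L m)) (L n)).
  { intros m n; induction n; intros H; [lia|]. simpl. apply in_or_app.
    destruct (PeanoNat.Nat.eq_dec m n) as [->|ne]; [right; left; auto| left; apply IHn; lia]. }
  intros m n E. destruct (PeanoNat.Nat.lt_trichotomy m n) as [H|[H|H]]; auto.
  - exfalso. apply (Hnew (L n)). rewrite <- E. apply HL; auto.
  - exfalso. apply (Hnew (L m)). rewrite E. apply HL; auto.
Qed.

Section Enc.
Variables (K : Type) (nu : nat -> K) (nu_inj : forall m n, nu m = nu n -> m = n)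
  (p : K -> K -> K) (p_inj : forall a b a' b', p a b = p a' b' -> a = a' /\ b = b').

Definition so (o : option K) : K :=
  match o with None => nu 0 | Some k =>
    match excluded_middle_informative (exists m, k = nu m) with
    | left _ => nu (S (nuinv K nu k)) | right _ => k end end.

Lemma nuinv_spec k : (exists m, k = nu m) -> nu (nuinv K nu k) = k.
Proof. intros H; unfold nuinv. apply (eps_spec 0 (fun n => nu n = k)). destruct H as [m ->]; eauto. Qed.

Lemma so_inj o o' : so o = so o' -> o = o'.
Proof.
  destruct o as [k|]; destruct o' as [k'|]; simpl; auto;
  repeat destruct excluded_middle_informative; intros E.
  - apply nu_inj in E. injection E as E. rewrite <- (nuinv_spec k), <- (nuinv_spec k'), E; auto.
  - exfalso; apply n; eauto.
  - exfalso; apply n; eauto.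
  - subst; auto.
  - apply nu_inj in E; discriminate.
  - exfalso; apply n; eauto.
  - apply nu_inj in E; discriminate.
  - exfalso; apply n; eauto.
Qed.

Fixpoint encL (l : list K) : K :=
  match l with nil => so None | a :: l => so (Some (p a (encL l))) end.

Lemma encL_inj l l' : encL l = encL l' -> l = l'.
Proof.
  revert l'; induction l as [|a l IH]; intros [|a' l'] E; cbn [encL] in E; auto;
  apply so_inj in E; try discriminate.
  injection E as E. apply p_inj in E. destruct E as [-> E]. f_equal; auto.
Qed.

Definition encB (bl : bool * list K) : K := p (if fst bl then nu 0 else nu 1) (encL (snd bl)).
Lemma encB_inj x y : encB x = encB y -> x = y.
Proof.
  destruct x as [b l]; destruct y as [b' l']; unfold encB; simpl; intros E.
  apply p_inj in E; destruct E as [E1 E2]. apply encL_inj in E2; subst.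
  destruct b; destruct b'; auto; apply nu_inj in E1; discriminate.
Qed.

Lemma map_inj {A B} (f : A -> B) : (forall x y, f x = f y -> x = y) -> forall l l', map f l = map f l' -> l = l'.
Proof.
  intros Hf; induction l; intros [|b l'] E; simpl in E; try discriminate; auto.
  injection E as E1 E2. f_equal; auto.
Qed.

Definition encI (t : nat * list (bool * list K)) : K := p (nu (fst t)) (encL (map encB (snd t))).
Lemma encI_inj x y : encI x = encI y -> x = y.
Proof.
  destruct x as [n w]; destruct y as [n' w']; unfold encI; simpl; intros E.
  apply p_inj in E; destruct E as [E1 E2]. apply nu_inj in E1. apply encL_inj in E2.
  apply map_inj in E2; [subst; auto| exact encB_inj].
Qed.
End Enc.

Lemma index_surj (K : Type) : (~ exists l : list K, forall x, In x l) ->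
  exists sur : K -> nat * list (bool * list K), forall t, exists k, sur k = t.
Proof.
  intros HK. destruct (infinite_nu K HK) as [nu nu_inj].
  destruct (hessenberg K nu nu_inj) as [p p_inj].
  exists (fun k => eps (0, nil) (fun t => encI K nu p t = k)).
  intros t; exists (encI K nu p t).
  apply (encI_inj K nu nu_inj p p_inj).
  apply (eps_spec (0,nil) (fun t' => encI K nu p t' = encI K nu p t)); eauto.
Qed.

Notation "x ** y" := (gmul x y) (at level 40, left associativity).

Existing Class is_group.
Section GroupLemmas.
Context {G : TopGroup} {HG : is_group G}.

Lemma ga (x y z : G) : x ** (y ** z) = x ** y ** z.
Proof. apply HG. Qed.
Lemma g1l (x : G) : gone ** x = x.
Proof. apply HG. Qed.
Lemma g1r (x : G) : x ** gone = x.
Proof. apply HG. Qed.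
Lemma gVl (x : G) : ginv x ** x = gone.
Proof. apply HG. Qed.
Lemma gVr (x : G) : x ** ginv x = gone.
Proof. apply HG. Qed.
Lemma gKl (x y : G) : ginv x ** (x ** y) = y.
Proof. rewrite ga, gVl, g1l; auto. Qed.
Lemma gKl' (x y : G) : x ** (ginv x ** y) = y.
Proof. rewrite ga, gVr, g1l; auto. Qed.
Lemma gKr (x y : G) : x ** y ** ginv y = x.
Proof. rewrite <- ga, gVr, g1r; auto. Qed.
Lemma gKr' (x y : G) : x ** ginv y ** y = x.
Proof. rewrite <- ga, gVl, g1r; auto. Qed.
Lemma gcanl (x y z : G) : x ** y = x ** z -> y = z.
Proof. intros E. rewrite <- (gKl x y), E, gKl; auto. Qed.
Lemma gcanr (x y z : G) : y ** x = z ** x -> y = z.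
Proof. intros E. rewrite <- (gKr y x), E, gKr; auto. Qed.
Lemma ginv_uniq (x y : G) : x ** y = gone -> y = ginv x.
Proof. intros E. apply (gcanl x). rewrite E, gVr; auto. Qed.
Lemma ginvK (x : G) : ginv (ginv x) = x.
Proof. symmetry; apply ginv_uniq. apply gVl. Qed.
Lemma ginvM (x y : G) : ginv (x ** y) = ginv y ** ginv x.
Proof. symmetry; apply ginv_uniq. rewrite ga, <- (ga x y), gVr, g1r, gVr; auto. Qed.
Lemma ginv1 : ginv (@gone G) = gone.
Proof. symmetry; apply ginv_uniq, g1l. Qed.
Lemma gmul_eq1 (x y : G) : ginv x ** y = gone -> x = y.
Proof. intros E. apply ginv_uniq in E. rewrite E, ginvK; auto. Qed.
End GroupLemmas.

Lemma hom1 (G H : TopGroup) (f : G -> H) : is_group G -> is_group H -> homomorphism f -> f gone = gone.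
Proof.
  intros HG HH Hf. apply (gcanl (f gone)). rewrite <- Hf, g1r, g1r; auto.
Qed.
Lemma homV (G H : TopGroup) (f : G -> H) : is_group G -> is_group H -> homomorphism f -> forall x, f (ginv x) = ginv (f x).
Proof.
  intros HG HH Hf x. apply ginv_uniq; auto. rewrite <- Hf, gVr, hom1; auto.
Qed.

Definition normal {G : TopGroup} (P : G -> Prop) := forall (g x : G), P x -> P (g ** x ** ginv g).

Definition nb (G : TopGroup) := forall V : G -> Prop, nbhd_e V ->
  exists W, gopen W /\ is_subgroup W /\ normal W /\ forall x, W x -> V x.

Existing Class is_topgroup.
#[export] Instance tg_group {G : TopGroup} (H : is_topgroup G) : is_group G := proj1 H.
Section TopLemmas.
Context {G : TopGroup} {HT : is_topgroup G}.

Lemma open_ext (U V : G -> Prop) : gopen U -> (forall x, U x <-> V x) -> gopen V.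
Proof.
  intros HU H. assert (E : U = V) by (apply functional_extensionality; intros; apply propositional_extensionality; auto).
  subst; auto.
Qed.

Lemma open_true : gopen (fun _ : G => True).
Proof. apply HT. Qed.
Lemma open_and (U V : G -> Prop) : gopen U -> gopen V -> gopen (fun x => U x /\ V x).
Proof. apply HT. Qed.

Lemma open_local (A : G -> Prop) :
  (forall x, A x -> exists U, gopen U /\ U x /\ forall y, U y -> A y) -> gopen A.
Proof.
  intros H.
  set (I := {U : G -> Prop | gopen U /\ forall y, U y -> A y}).
  assert (Ho : gopen (fun x => exists i : I, proj1_sig i x)).
  { apply (proj2 (proj2 (proj1 (proj2 HT)))). intros i. exact (proj1 (proj2_sig i)). }
  apply (open_ext _ _ Ho). intros x; split.
  - intros [i Ux]. destruct i as [U [HU HA]]. simpl in Ux. apply HA; auto.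
  - intros Ax. destruct (H x Ax) as [U [HU [Ux HUA]]]. exists (exist _ U (conj HU HUA)); simpl; auto.
Qed.

Lemma mulc : mul_continuous G.
Proof. apply HT. Qed.
Lemma invc : inv_continuous G.
Proof. apply HT. Qed.
Lemma hausd : hausdorff G.
Proof. apply HT. Qed.

Lemma open_tl (a : G) (U : G -> Prop) : gopen U -> gopen (fun x => U (a ** x)).
Proof.
  intros HU. apply open_local. intros x Ux.
  destruct (mulc U a x HU Ux) as [A [B [HA [HB [Aa [Bx HAB]]]]]].
  exists B; split; auto.
Qed.
Lemma open_tr (a : G) (U : G -> Prop) : gopen U -> gopen (fun x => U (x ** a)).
Proof.
  intros HU. apply open_local. intros x Ux.
  destruct (mulc U x a HU Ux) as [A [B [HA [HB [Aa [Bx HAB]]]]]].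
  exists A; split; auto.
Qed.
Lemma open_inv (U : G -> Prop) : gopen U -> gopen (fun x => U (ginv x)).
Proof. apply invc. Qed.

Lemma nbhd_open (U : G -> Prop) : gopen U -> U gone -> nbhd_e U.
Proof. intros; exists U; auto. Qed.

Lemma subgroup_open (M : G -> Prop) : is_subgroup M -> nbhd_e M -> gopen M.
Proof.
  intros [M1 [M2 M3]] [W [HW [W1 WM]]]. apply open_local. intros m Mm.
  exists (fun x => W (ginv m ** x)). split; [apply open_tl; auto|split].
  - rewrite gVl; auto.
  - intros y Wy. rewrite <- (gKl' m y). apply M2; auto.
Qed.

Lemma conj_mul (g x y : G) : g ** (x ** y) ** ginv g = (g ** x ** ginv g) ** (g ** y ** ginv g).
Proof.
  rewrite !ga. f_equal. rewrite <- (ga g _ _), gKr', !ga; auto.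
Qed.

Lemma nb_of_NA_bal : non_archimedean G -> balanced G -> nb G.
Proof.
  intros HNA [Hb _] V HV.
  destruct (HNA V HV) as [V' [HV' [SV' V'V]]].
  destruct (Hb V' (nbhd_open V' HV' (proj1 SV'))) as [W [HW HWV]].
  destruct (HNA W HW) as [W' [HW' [SW' W'W]]].
  set (M := fun z => forall g, V' (g ** z ** ginv g)).
  assert (SM : is_subgroup M).
  { destruct SV' as [V1 [V2 V3]]. split; [|split].
    - intros g. rewrite g1r, gVr; auto.
    - intros x y Mx My g. rewrite conj_mul; auto.
    - intros x Mx g. replace (g ** ginv x ** ginv g) with (ginv (g ** x ** ginv g)); auto.
      rewrite !ginvM, ginvK, ga; auto. }
  assert (W'M : forall x, W' x -> M x).
  { intros x W'x g. specialize (HWV g (g ** x)). unfold ent_left, ent_right in HWV.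
    apply HWV. rewrite gKl; auto. }
  exists M; split; [|split; [auto|split]].
  - apply subgroup_open; auto. exists W'; split; auto. split; [apply SW'|auto].
  - intros g x Mx h. replace (h ** (g ** x ** ginv g) ** ginv h) with ((h ** g) ** x ** ginv (h ** g)).
    + apply Mx.
    + rewrite ginvM, !ga; auto.
  - intros x Mx. apply V'V. specialize (Mx gone). rewrite g1l, ginv1, g1r in Mx; auto.
Qed.

Lemma nb_of_NA_ab : non_archimedean G -> abelian G -> nb G.
Proof.
  intros HNA Hab V HV. destruct (HNA V HV) as [W [HW [SW WV]]].
  exists W; repeat split; auto; try apply SW.
  intros g x Wx. rewrite (Hab g x), gKr; auto.
Qed.

Lemma bool_all : boolean G -> forall x : G, x ** x = gone.
Proof. intros Hb x. destruct (classic (x = gone)) as [->|n]; [apply g1l| apply Hb; auto]. Qed.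

Lemma bool_ab : boolean G -> abelian G.
Proof.
  intros Hb x y. pose proof (bool_all Hb) as B.
  assert (Iv : forall z : G, ginv z = z) by (intros z; symmetry; apply ginv_uniq; auto).
  rewrite <- (Iv (x ** y)), ginvM, !Iv; auto.
Qed.

Lemma nb_NA : nb G -> non_archimedean G.
Proof. intros H V HV. destruct (H V HV) as [W [HW [SW [_ WV]]]]. exists W; auto. Qed.

Lemma nb_bal : nb G -> balanced G.
Proof.
  intros H; split; intros V HV; destruct (H V HV) as [W [HW [SW [NW WV]]]];
  exists W; (split; [apply nbhd_open; auto; apply SW|]); unfold ent_left, ent_right; intros x y Wxy; apply WV.
  - replace (y ** ginv x) with (x ** (ginv x ** y) ** ginv x); [apply NW; auto|].
    rewrite gKl'; auto.
  - replace (ginv x ** y) with (ginv x ** (y ** ginv x) ** ginv (ginv x)); [apply NW; auto|].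
    rewrite ginvK, <- ga, gKr'; auto.
Qed.
End TopLemmas.

Definition SubTG (G : TopGroup) (P : G -> Prop) (SP : is_subgroup P) : TopGroup := {|
  carrier := sig P;
  gmul := fun a b => exist P (proj1_sig a ** proj1_sig b) (proj1 (proj2 SP) _ _ (proj2_sig a) (proj2_sig b));
  ginv := fun a => exist P (ginv (proj1_sig a)) (proj2 (proj2 SP) _ (proj2_sig a));
  gone := exist P gone (proj1 SP);
  gopen := fun U => exists W : G -> Prop, gopen W /\ forall s, U s <-> W (proj1_sig s) |}.

Lemma sig_eq {A} {P : A -> Prop} (a b : sig P) : proj1_sig a = proj1_sig b -> a = b.
Proof.
  destruct a as [a pa]; destruct b as [b pb]; simpl; intros ->. f_equal; apply proof_irrelevance.
Qed.

Section Sub.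
Variables (G : TopGroup) (P : G -> Prop) (SP : is_subgroup P).
Context {HT : is_topgroup G}.
Let S := SubTG G P SP.

Lemma sub_group : is_group S.
Proof.
  split; [|split].
  - intros x y z; apply sig_eq; simpl; apply ga.
  - intros x; split; apply sig_eq; simpl; [apply g1l|apply g1r].
  - intros x; split; apply sig_eq; simpl; [apply gVl|apply gVr].
Qed.

Lemma sub_topgroup : is_topgroup S.
Proof.
  split; [exact sub_group|split; [|split; [|split]]].
  - split; [|split].
    + exists (fun _ => True); split; [apply open_true| tauto].
    + intros U V [W1 [H1 E1]] [W2 [H2 E2]]. exists (fun x => W1 x /\ W2 x); split; [apply open_and; auto|].
      intros s; rewrite E1, E2; tauto.
    + intros I U HU.
      set (Wf := fun i => proj1_sig (constructive_indefinite_description _ (HU i))).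
      assert (HW : forall i, gopen (Wf i) /\ forall s, U i s <-> Wf i (proj1_sig s)).
      { intros i; unfold Wf; destruct constructive_indefinite_description; simpl; auto. }
      exists (fun x => exists i, Wf i x). split.
      * apply (proj2 (proj2 (proj1 (proj2 HT)))). intros; apply HW.
      * intros s; split; intros [k Hk]; exists k; apply HW; auto.
  - intros x y Nxy.
    assert (N' : proj1_sig x <> proj1_sig y) by (intros E; apply Nxy, sig_eq; auto).
    destruct (hausd _ _ N') as [U [V [HU [HV [Ux [Vy D]]]]]].
    exists (fun s => U (proj1_sig s)), (fun s => V (proj1_sig s)).
    split; [exists U; split; auto; tauto|]. split; [exists V; split; auto; tauto|].
    split; auto. split; auto. intros z; apply D.
  - intros W x y [W' [HW' E]] Wxy. apply E in Wxy; simpl in Wxy.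
    destruct (mulc W' _ _ HW' Wxy) as [A [B [HA [HB [Ax [By HAB]]]]]].
    exists (fun s => A (proj1_sig s)), (fun s => B (proj1_sig s)).
    split; [exists A; split; auto; tauto|]. split; [exists B; split; auto; tauto|].
    split; auto. split; auto. intros a b Aa Bb. apply E. simpl. apply HAB; auto.
  - intros W [W' [HW' E]]. exists (fun x => W' (ginv x)). split; [apply open_inv; auto|].
    intros s. rewrite E. simpl. tauto.
Qed.

Lemma sub_nb : nb G -> nb S.
Proof.
  intros Hnb V [U [[W [HW E]] [Ue UV]]].
  assert (We : W gone) by (apply E in Ue; exact Ue).
  destruct (Hnb W (nbhd_open W HW We)) as [M [HM [[M1 [M2 M3]] [NM MW]]]].
  exists (fun s => M (proj1_sig s)). split; [exists M; split; auto; tauto|].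
  split; [split; [|split]|split].
  - exact M1.
  - intros x y; apply M2.
  - intros x; apply M3.
  - intros g x; apply NM.
  - intros x Mx. apply UV, E, MW; auto.
Qed.

Lemma sub_ab : abelian G -> abelian S.
Proof. intros H x y; apply sig_eq; apply H. Qed.

Lemma sub_bool : boolean G -> boolean S.
Proof. intros H x _; apply sig_eq; simpl. apply bool_all; auto. Qed.
End Sub.

Definition ChainTG (G : TopGroup) (N : nat -> G -> Prop) : TopGroup := {|
  carrier := carrier G; gmul := @gmul G; ginv := @ginv G; gone := @gone G;
  gopen := fun U => forall z, U z -> exists n, forall w, N n (ginv z ** w) -> U w |}.

Section Chain.
Variables (G : TopGroup) (N : nat -> G -> Prop).
Context {HG : is_group G}.
Hypothesis HN : forall n, is_subgroup (N n) /\ normal (N n).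
Hypothesis Hdec : forall n x, N (S n) x -> N n x.
Hypothesis Hsep : forall x, (forall n, N n x) -> x = gone.
Let C := ChainTG G N.
Local Instance chain_group : is_group C := HG.

Lemma N1 n : N n gone. Proof. apply HN. Qed.
Lemma NM n x y : N n x -> N n y -> N n (x ** y). Proof. apply HN. Qed.
Lemma NV n x : N n x -> N n (ginv x). Proof. apply HN. Qed.
Lemma NC n g x : N n x -> N n (g ** x ** ginv g). Proof. apply HN. Qed.
Lemma NC' n g x : N n x -> N n (ginv g ** x ** g).
Proof. intros H. rewrite <- (ginvK g) at 2. apply NC; auto. Qed.
Lemma Nle m n x : m <= n -> N n x -> N m x.
Proof. induction 1; auto. Qed.

Lemma chain_coset_open n a : @gopen C (fun w => N n (ginv a ** w)).
Proof.
  intros z Hz. exists n. intros w Hw. simpl in *. replace (ginv a ** w) with ((ginv a ** z) ** (ginv z ** w)).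
  - apply NM; auto.
  - rewrite <- ga, gKl'; auto.
Qed.

Lemma chain_topgroup : is_topgroup C.
Proof.
  split; [exact HG|split; [|split; [|split]]].
  - split; [|split].
    + intros z _; exists 0; auto.
    + intros U V HU HV z [Uz Vz]. destruct (HU z Uz) as [n1 H1]. destruct (HV z Vz) as [n2 H2].
      exists (max n1 n2). intros w Hw. split; [apply H1; apply (Nle n1 (max n1 n2))|apply H2; apply (Nle n2 (max n1 n2))]; auto; lia.
    + intros I U HU z [k Hk]. destruct (HU k z Hk) as [n Hn]. exists n; intros w Hw; exists k; auto.
  - intros x y Nxy.
    assert (exists n, ~ N n (ginv x ** y)) as [n Hn].
    { apply not_all_ex_not. intros H. apply Nxy. apply gmul_eq1. apply Hsep; auto. }
    exists (fun w => N n (ginv x ** w)), (fun w => N n (ginv y ** w)).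
    split; [apply chain_coset_open|split; [apply chain_coset_open|]].
    split; [simpl; rewrite gVl; apply N1|split; [simpl; rewrite gVl; apply N1|]].
    intros w H1 H2. apply Hn. replace (ginv x ** y) with ((ginv x ** w) ** ginv (ginv y ** w)).
    + apply NM; auto. apply NV; auto.
    + rewrite ginvM, ginvK, ga, gKr; auto.
  - intros W x y HW Wxy. destruct (HW _ Wxy) as [n Hn].
    exists (fun w => N n (ginv x ** w)), (fun w => N n (ginv y ** w)).
    split; [apply chain_coset_open|split; [apply chain_coset_open|]].
    split; [simpl; rewrite gVl; apply N1|split; [simpl; rewrite gVl; apply N1|]].
    intros a b Ha Hb. apply Hn. simpl in *.
    replace (ginv (x ** y) ** (a ** b)) with ((ginv y ** (ginv x ** a) ** y) ** (ginv y ** b)).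
    + apply NM; auto. apply NC'; auto.
    + rewrite ginvM, <- !ga. f_equal. rewrite gKl', ga; auto.
  - intros W HW z Wz. simpl in Wz. destruct (HW _ Wz) as [n Hn]. exists n. intros w Hw. simpl.
    apply Hn. simpl. rewrite ginvK.
    replace (z ** ginv w) with (z ** ginv (ginv z ** w) ** ginv z).
    + apply NC, NV; auto.
    + rewrite ginvM, ginvK, <- ga, gKr; auto.
Qed.

Lemma chain_N_open n : @gopen C (N n).
Proof.
  intros z Hz. exists n. intros w Hw. replace w with (z ** (ginv z ** w)); [apply NM; auto|apply gKl'].
Qed.

Lemma chain_nb : nb C.
Proof.
  intros V [U [HU [Ue UV]]]. destruct (HU _ Ue) as [n Hn].
  exists (N n). split; [apply chain_N_open|]. split; [apply HN|]. split; [apply HN|].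
  intros x Hx. apply UV, Hn. simpl. rewrite ginv1, g1l; auto.
Qed.
End Chain.

Lemma chain_is_group (G : TopGroup) (N : nat -> G -> Prop) : is_group G -> is_group (ChainTG G N).
Proof. exact (fun H => H). Qed.

Definition agree {K : Type} (n : nat) (x y : nat -> K) := forall k, k < n -> x k = y k.

Section Free.
Variables (K : Type) (Omega : TopGroup -> Prop).
Hypothesis O1 : forall G, Omega G -> is_topgroup G /\ nb G.
Hypothesis O2 : forall G P SP, Omega G -> Omega (SubTG G P SP).
Hypothesis O3 : forall G N, Omega G -> (forall n, is_subgroup (N n) /\ normal (N n)) ->
  (forall n x, N (S n) x -> N n x) -> (forall x, (forall n, N n x) -> x = gone) -> Omega (ChainTG G N).
Variables (F : TopGroup) (i : (nat -> K) -> F).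
Hypothesis Hfree : @is_free_over_power Omega K F i.

Let OF : Omega F := proj1 Hfree.
Local Instance HTF : is_topgroup F := proj1 (O1 F OF).
Let nbF : nb F := proj2 (O1 F OF).
Let unifi : unif_cont_from_power i := proj1 (proj2 Hfree).
Let univ := proj2 (proj2 Hfree).

Inductive Gen : F -> Prop :=
| Gi x : Gen (i x)
| Ge : Gen gone
| Gm a b : Gen a -> Gen b -> Gen (a ** b)
| Gv a : Gen a -> Gen (ginv a).

Inductive Ngen (n : nat) : F -> Prop :=
| Nb x y : agree n x y -> Ngen n (ginv (i x) ** i y)
| Ne : Ngen n gone
| Nm a b : Ngen n a -> Ngen n b -> Ngen n (a ** b)
| Nv a : Ngen n a -> Ngen n (ginv a)
| Nc g a : Ngen n a -> Ngen n (g ** a ** ginv g).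

Lemma gen_sub : is_subgroup Gen.
Proof. split; [apply Ge|split; [apply Gm|apply Gv]]. Qed.

Lemma uniq_F : forall phi psi : F -> F, homomorphism phi -> continuous_map phi ->
  homomorphism psi -> continuous_map psi -> (forall x, phi (i x) = i x) -> (forall x, psi (i x) = i x) ->
  forall z, phi z = psi z.
Proof. intros. apply (proj2 (univ F i OF unifi) phi psi); auto. Qed.

Lemma gen_all : forall z, Gen z.
Proof.
  set (S := SubTG F Gen gen_sub).
  set (i' := fun x => exist Gen (i x) (Gi x) : S).
  assert (Hu : unif_cont_from_power i').
  { intros V [U [[W [HW E]] [Ue UV]]].
    assert (We : W gone) by (apply E in Ue; exact Ue).
    destruct (unifi W (nbhd_open W HW We)) as [n Hn]. exists n. intros x y Hxy.
    destruct (Hn x y Hxy) as [H1 H2]. split; apply UV, E; simpl; auto. }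
  destruct (univ S i' (O2 F Gen gen_sub OF) Hu) as [[psi [Hpsi [Cpsi Epsi]]] _].
  assert (E : forall z, proj1_sig (psi z) = z).
  { apply (uniq_F (fun z => proj1_sig (psi z)) (fun z => z)).
    - intros x y; rewrite Hpsi; reflexivity.
    - intros W HW. apply (Cpsi (fun s => W (proj1_sig s))). exists W; split; auto; tauto.
    - intros x y; reflexivity.
    - intros W HW; auto.
    - intros x; rewrite Epsi; reflexivity.
    - auto. }
  intros z; rewrite <- (E z). apply (proj2_sig (psi z)).
Qed.

Lemma N_sub n : is_subgroup (Ngen n) /\ normal (Ngen n).
Proof. split; [split; [apply Ne|split; [apply Nm|apply Nv]]|intros g x; apply Nc]. Qed.

Lemma N_dec n x : Ngen (S n) x -> Ngen n x.
Proof.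
  induction 1.
  - apply Nb. intros k Hk; apply H; lia.
  - apply Ne.
  - apply Nm; auto.
  - apply Nv; auto.
  - apply Nc; auto.
Qed.

Lemma N_base (V : F -> Prop) : nbhd_e V -> exists n, forall x, Ngen n x -> V x.
Proof.
  intros HV. destruct (nbF V HV) as [W [HW [[W1 [W2 W3]] [NW WV]]]].
  destruct (unifi W (nbhd_open W HW W1)) as [n Hn]. exists n. intros x Hx. apply WV.
  induction Hx; auto. apply (Hn x y H).
Qed.

Lemma N_sep x : (forall n, Ngen n x) -> x = gone.
Proof.
  intros H. apply NNPP; intros Nx.
  destruct (hausd x gone Nx) as [U [V [HU [HV [Ux [Ve D]]]]]].
  destruct (N_base V (nbhd_open V HV Ve)) as [n Hn]. apply (D x); auto.
Qed.

Lemma N_open n : gopen (Ngen n).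
Proof.
  set (C := ChainTG F Ngen).
  assert (OC : Omega C) by (apply O3; auto; [exact N_sub| exact N_dec| exact N_sep]).
  assert (Hu : @unif_cont_from_power K C i).
  { intros V [U [HU [Ue UV]]]. destruct (HU _ Ue) as [m Hm]. exists m. intros x y Hxy.
    split; apply UV, Hm; simpl; rewrite ginv1, g1l.
    - apply Nb; auto.
    - replace (i y ** ginv (i x)) with (i x ** (ginv (i x) ** i y) ** ginv (i x)).
      + apply Nc, Nb; auto.
      + rewrite gKl'; auto. }
  destruct (univ C i OC Hu) as [[phi [Hphi [Cphi Ephi]]] _].
  assert (GC : is_group C) by (apply chain_is_group; apply tg_group; exact HTF).
  assert (E : forall z, phi z = z).
  { intros z. induction (gen_all z).
    - apply Ephi.
    - apply (hom1 F C phi); auto; apply tg_group; exact HTF.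
    - rewrite Hphi, IHg1, IHg2; reflexivity.
    - rewrite (homV F C phi); auto; try (apply tg_group; exact HTF). rewrite IHg; reflexivity. }
  assert (O := Cphi (Ngen n) (chain_N_open F Ngen (HG:=tg_group HTF) N_sub n)).
  apply (open_ext _ _ O). intros z; rewrite E; tauto.
Qed.

Variable k0 : K.
Definition ext (l : list K) : nat -> K := fun k => nth k l k0.
Definition letter (a : bool * list K) : F := if fst a then i (ext (snd a)) else ginv (i (ext (snd a))).
Fixpoint word (w : list (bool * list K)) : F :=
  match w with nil => gone | a :: w => letter a ** word w end.

Lemma word_app w1 w2 : word (w1 ++ w2) = word w1 ** word w2.
Proof. induction w1; simpl. rewrite g1l; auto. rewrite IHw1, ga; auto. Qed.

Lemma word_inv w : exists w', word w' = ginv (word w).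
Proof.
  induction w as [|a w [w' IH]].
  - exists nil; simpl; rewrite ginv1; auto.
  - exists (w' ++ (negb (fst a), snd a) :: nil). rewrite word_app, IH. simpl.
    rewrite g1r, ginvM. f_equal. unfold letter; simpl. destruct (fst a); simpl; auto. rewrite ginvK; auto.
Qed.

Lemma prefix_agree n (x : nat -> K) : agree n x (ext (map x (seq 0 n))).
Proof.
  intros k Hk. unfold ext. rewrite (nth_indep _ k0 (x 0)).
  - rewrite map_nth, seq_nth; auto.
  - rewrite length_map, length_seq; auto.
Qed.

Lemma gen_word n z : exists w, Ngen n (ginv z ** word w).
Proof.
  induction (gen_all z) as [x| |a b _ [w1 H1] _ [w2 H2]|a _ [w H]].
  - exists ((true, map x (seq 0 n)) :: nil). simpl. unfold letter; simpl. rewrite g1r.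
    apply Nb, prefix_agree.
  - exists nil; simpl. rewrite ginv1, g1l. apply Ne.
  - exists (w1 ++ w2). rewrite word_app, ginvM.
    replace (ginv b ** ginv a ** (word w1 ** word w2)) with ((ginv b ** (ginv a ** word w1) ** ginv (ginv b)) ** (ginv b ** word w2)).
    + apply Nm; auto. apply Nc; auto.
    + rewrite ginvK, !ga, gKr; auto.
  - destruct (word_inv w) as [w' Hw']. exists w'. rewrite Hw', ginvK.
    replace (a ** ginv (word w)) with (ginv (a ** (ginv a ** word w) ** ginv a)).
    + apply Nv, Nc; auto.
    + rewrite gKl', ginvM, ginvK; auto.
Qed.
End Free.

Section Compl.
Variables (F Fh : TopGroup) (j : F -> Fh) (N : nat -> F -> Prop).
Context {HTF : is_topgroup F}.
Hypothesis Hc : is_completion F Fh j.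
Hypothesis HN : forall n, is_subgroup (N n) /\ normal (N n).
Hypothesis Hdec : forall n x, N (S n) x -> N n x.
Hypothesis Hopen : forall n, gopen (N n).
Hypothesis Hbase : forall V, nbhd_e V -> exists n, forall x, N n x -> V x.

Local Instance HTh : is_topgroup Fh := proj1 Hc.
Lemma jhom : homomorphism j. Proof. apply Hc. Qed.
Lemma jcont : continuous_map j. Proof. apply Hc. Qed.
Lemma jemb : forall U : F -> Prop, gopen U -> exists W : Fh -> Prop, gopen W /\ forall x, U x <-> W (j x).
Proof. apply Hc. Qed.
Lemma jdense : forall W : Fh -> Prop, gopen W -> (exists z, W z) -> exists x, W (j x).
Proof. apply Hc. Qed.
Lemma j1 : j gone = gone. Proof. exact (hom1 F Fh j (tg_group HTF) (tg_group HTh) jhom). Qed.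
Lemma jV x : j (ginv x) = ginv (j x). Proof. exact (homV F Fh j (tg_group HTF) (tg_group HTh) jhom x). Qed.
Lemma jM x y : j (x ** y) = j x ** j y. Proof. apply jhom. Qed.

Definition Cl (n : nat) (z : Fh) := forall U, gopen U -> U z -> exists x, N n x /\ U (j x).

Lemma Cl_sub n : is_subgroup (Cl n).
Proof.
  destruct (HN n) as [[N1 [N2 N3]] NN]. split; [|split].
  - intros U HU Ue. exists gone; rewrite j1; auto.
  - intros a b Ha Hb U HU Uab. destruct (mulc U a b HU Uab) as [A [B [HA [HB [Aa [Bb HAB]]]]]].
    destruct (Ha A HA Aa) as [x [Nx Ax]]. destruct (Hb B HB Bb) as [y [Ny By]].
    exists (x ** y); split; auto. rewrite jM; auto.
  - intros a Ha U HU Ua. assert (Ho := open_inv U HU).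
    destruct (Ha _ Ho Ua) as [x [Nx Ux]].
    exists (ginv x); split; auto. rewrite jV; auto.
Qed.

Lemma Cl_W n : exists W : Fh -> Prop, gopen W /\ (forall x, N n x <-> W (j x)) /\ (forall z, W z -> Cl n z).
Proof.
  destruct (jemb (N n) (Hopen n)) as [W [HW E]]. exists W; split; auto; split; auto.
  intros z Wz U HU Uz. destruct (jdense (fun y => U y /\ W y)) as [x [Ux Wx]].
  - apply open_and; auto.
  - exists z; auto.
  - exists x; split; auto. apply E; auto.
Qed.

Lemma Cl_open n : gopen (Cl n).
Proof.
  destruct (Cl_W n) as [W [HW [E WC]]].
  assert (We : W gone) by (rewrite <- j1; apply E; apply HN).
  apply subgroup_open; [apply Cl_sub|]. exists W; split; auto.
Qed.

Lemma Cl_j n x : Cl n (j x) <-> N n x.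
Proof.
  destruct (HN n) as [[N1 [N2 N3]] NN].
  split.
  - intros H. destruct (Cl_W n) as [W [HW [E WC]]].
    destruct (H (fun y => W (ginv (j x) ** y))) as [y [Ny Wy]].
    + apply open_tl; auto.
    + rewrite gVl, <- j1. apply E; auto.
    + rewrite <- jV, <- jM in Wy. apply E in Wy.
      replace x with (y ** ginv (ginv x ** y)); [apply N2; auto|].
      rewrite ginvM, ginvK, gKl'; auto.
  - intros Nx U HU Ux. exists x; auto.
Qed.

Lemma Cl_normal n : normal (Cl n).
Proof.
  intros g z Hz U HU Uz.
  destruct (mulc U (g ** z) (ginv g) HU Uz) as [A [B [HA [HB [Aa [Bb HAB]]]]]].
  destruct (mulc A g z HA Aa) as [A1 [A2 [HA1 [HA2 [A1g [A2z HA12]]]]]].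
  destruct (jdense (fun y => A1 y /\ B (ginv y))) as [f [A1f Bf]].
  - apply open_and; auto. apply open_inv; auto.
  - exists g; split; auto.
  - destruct (Hz A2 HA2 A2z) as [x [Nx A2x]].
    exists (f ** x ** ginv f); split; [apply HN; auto|].
    rewrite !jM, jV. apply HAB; auto.
Qed.

Lemma Cl_dec n z : Cl (S n) z -> Cl n z.
Proof. intros H U HU Uz. destruct (H U HU Uz) as [x [Nx Ux]]. exists x; auto. Qed.
Lemma Cl_le m n z : m <= n -> Cl n z -> Cl m z.
Proof. induction 1; auto. intros; apply IHle, Cl_dec; auto. Qed.

Lemma Cl_base V : nbhd_e V -> exists n, forall z, Cl n z -> V z.
Proof.
  intros [O [HO [Oe OV]]].
  assert (Oee : O (gone ** gone)) by (rewrite g1l; auto).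
  destruct (mulc O gone gone HO Oee) as [O1 [O2 [HO1 [HO2 [O1e [O2e HO12]]]]]].
  destruct (Hbase (fun x => O1 (j x))) as [n Hn].
  - exists (fun x => O1 (j x)); split; [apply jcont; auto|]. split; auto. rewrite j1; auto.
  - exists n. intros z Hz. apply OV.
    destruct (Hz (fun y => O2 (ginv (ginv z ** y)))) as [x [Nx Hx]].
    + apply open_inv in HO2. apply (open_tl (ginv z)) in HO2. exact HO2.
    + rewrite gVl, ginv1; auto.
    + replace z with (j x ** ginv (ginv z ** j x)).
      * apply HO12; auto.
      * rewrite ginvM, ginvK, gKl'; auto.
Qed.

Lemma Cl_nb : nb Fh.
Proof.
  intros V HV. destruct (Cl_base V HV) as [n Hn]. exists (Cl n).
  split; [apply Cl_open|split; [apply Cl_sub|split; [apply Cl_normal|auto]]].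
Qed.

Lemma compl_ab : abelian F -> abelian Fh.
Proof.
  intros Hab x y. apply NNPP; intros Nxy.
  destruct (hausd _ _ Nxy) as [U [V [HU [HV [Uxy [Vyx D]]]]]].
  destruct (mulc U x y HU Uxy) as [A1 [B1 [HA1 [HB1 [A1x [B1y H1]]]]]].
  destruct (mulc V y x HV Vyx) as [B2 [A2 [HB2 [HA2 [B2y [A2x H2]]]]]].
  destruct (jdense (fun z => A1 z /\ A2 z)) as [f [Af1 Af2]]; [apply open_and; auto| exists x; auto|].
  destruct (jdense (fun z => B1 z /\ B2 z)) as [g [Bg1 Bg2]]; [apply open_and; auto| exists y; auto|].
  apply (D (j f ** j g)); auto. rewrite <- jM, Hab, jM. auto.
Qed.

Lemma compl_bool : boolean F -> boolean Fh.
Proof.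
  intros Hb x _. apply NNPP; intros Nx.
  destruct (hausd _ _ Nx) as [U [V [HU [HV [Uxx [Ve D]]]]]].
  destruct (mulc U x x HU Uxx) as [A [B [HA [HB [Ax [Bx H1]]]]]].
  destruct (jdense (fun z => A z /\ B z)) as [f [Af Bf]]; [apply open_and; auto| exists x; auto|].
  apply (D (j f ** j f)); auto. rewrite <- jM, bool_all, j1; auto.
Qed.

Section Ext.
Variables (H : TopGroup) (Phi : F -> H).
Context {HTH : is_topgroup H}.
Hypothesis nbH : nb H.
Hypothesis compH : complete H.
Hypothesis Phom : homomorphism Phi.
Hypothesis Pcont : continuous_map Phi.

Lemma PM x y : Phi (x ** y) = Phi x ** Phi y. Proof. apply Phom. Qed.
Lemma PV x : Phi (ginv x) = ginv (Phi x). Proof. exact (homV F H Phi (tg_group HTF) (tg_group HTH) Phom x). Qed.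

Lemma sepH (a b : H) : (forall W, gopen W -> is_subgroup W -> normal W -> W (ginv a ** b)) -> a = b.
Proof.
  intros HW. apply NNPP; intros Nab.
  assert (N1 : ginv a ** b <> gone) by (intros E; apply Nab, gmul_eq1; auto).
  destruct (hausd _ _ N1) as [U [V [HU [HV [Uab [Ve D]]]]]].
  destruct (nbH V (nbhd_open V HV Ve)) as [W [Wo [WS [WN WV]]]].
  apply (D (ginv a ** b)); auto. apply WV, HW; auto.
Qed.

Lemma dense_Cl n z : exists f, Cl n (ginv z ** j f).
Proof.
  destruct (jdense (fun y => Cl n (ginv z ** y))) as [f Hf].
  - apply open_tl; auto. apply Cl_open.
  - exists z. rewrite gVl. apply Cl_sub.
  - eauto.
Qed.

Definition Filt (z : Fh) (A : H -> Prop) := exists n, forall f, Cl n (ginv z ** j f) -> A (Phi f).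

Lemma Pbase (W : H -> Prop) : gopen W -> is_subgroup W -> exists n, forall g, N n g -> W (Phi g).
Proof.
  intros Wo WS. apply (Hbase (fun g => W (Phi g))). exists (fun g => W (Phi g)). split; [apply Pcont; auto|].
  split; auto. rewrite (hom1 F H Phi (tg_group HTF) (tg_group HTH) Phom). apply WS.
Qed.

Lemma Filt_lim z : exists L, forall U, gopen U -> U L -> Filt z U.
Proof.
  apply compH.
  - split; [exists 0; auto|split; [|split]].
    + intros [n Hn]. destruct (dense_Cl n z) as [f Hf]. apply (Hn f Hf).
    + intros A B [n1 H1] [n2 H2]. exists (max n1 n2). intros f Hf. split.
      * apply H1. eapply (Cl_le n1 (max n1 n2)); [lia|eauto].
      * apply H2. eapply (Cl_le n2 (max n1 n2)); [lia|eauto].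
    + intros A B AB [n Hn]. exists n; auto.
  - intros V HV. destruct (nbH V HV) as [W [Wo [WS [WN WV]]]].
    destruct (Pbase W Wo WS) as [n Hn].
    exists (fun h => exists f, Cl n (ginv z ** j f) /\ h = Phi f). split; [exists n; intros f Hf; exists f; auto|].
    intros a b [f [Hf ->]] [g [Hg ->]].
    assert (E : W (ginv (Phi f) ** Phi g)).
    { rewrite <- PV, <- PM. apply Hn. apply Cl_j. rewrite jM, jV.
      replace (ginv (j f) ** j g) with (ginv (ginv z ** j f) ** (ginv z ** j g)).
      - apply Cl_sub; auto. apply Cl_sub; auto.
      - rewrite ginvM, ginvK, <- ga, gKl'; auto. }
    split; apply WV; auto. unfold ent_right.
    replace (Phi g ** ginv (Phi f)) with (Phi f ** (ginv (Phi f) ** Phi g) ** ginv (Phi f)); [apply WN; auto|].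
    rewrite gKl'; auto.
Qed.

Definition Phih (z : Fh) : H := epsilon (inhabits gone) (fun L => forall U, gopen U -> U L -> Filt z U).

Lemma Phih_KP z (W : H -> Prop) : gopen W -> is_subgroup W ->
  exists n, forall f, Cl n (ginv z ** j f) -> W (ginv (Phih z) ** Phi f).
Proof.
  intros Wo WS. assert (HL := epsilon_spec (inhabits gone) _ (Filt_lim z)). fold (Phih z) in HL.
  apply (HL (fun y => W (ginv (Phih z) ** y))).
  - apply open_tl; auto.
  - rewrite gVl; apply WS.
Qed.

Lemma Phih_j x : Phih (j x) = Phi x.
Proof.
  apply sepH. intros W Wo WS WN. destruct (Phih_KP (j x) W Wo WS) as [n Hn]. apply Hn.
  rewrite gVl. apply Cl_sub.
Qed.

Lemma Phih_hom : homomorphism Phih.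
Proof.
  intros z w. symmetry. apply sepH. intros W Wo WS WN.
  destruct (Phih_KP z W Wo WS) as [n1 H1]. destruct (Phih_KP w W Wo WS) as [n2 H2].
  destruct (Phih_KP (z ** w) W Wo WS) as [n3 H3].
  set (n := max n1 (max n2 n3)).
  destruct (dense_Cl n z) as [f Hf]. destruct (dense_Cl n w) as [g Hg].
  assert (Hfg : Cl n (ginv (z ** w) ** j (f ** g))).
  { rewrite jM, ginvM.
    replace (ginv w ** ginv z ** (j f ** j g)) with ((ginv w ** (ginv z ** j f) ** ginv (ginv w)) ** (ginv w ** j g)).
    - apply Cl_sub; auto. apply Cl_normal; auto.
    - rewrite ginvK, !ga, gKr; auto. }
  assert (A1 : W (ginv (Phih z) ** Phi f)) by (apply H1; apply (Cl_le n1 n); [lia|auto]).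
  assert (A2 : W (ginv (Phih w) ** Phi g)) by (apply H2; apply (Cl_le n2 n); [lia|auto]).
  assert (A3 : W (ginv (Phih (z ** w)) ** Phi (f ** g))) by (apply H3; apply (Cl_le n3 n); [lia|auto]).
  rewrite PM in A3.
  destruct WS as [W1 [W2 W3]].
  replace (ginv (Phih z ** Phih w) ** Phih (z ** w)) with
    ((ginv (Phih w) ** (ginv (Phih z) ** Phi f) ** ginv (ginv (Phih w))) ** (ginv (Phih w) ** Phi g) ** ginv (ginv (Phih (z ** w)) ** (Phi f ** Phi g))).
  - apply W2; [apply W2|apply W3]; auto.
  - rewrite !ginvM, !ginvK, !ga, gKr, gKr, gKr; auto.
Qed.

Lemma Phih_cont : continuous_map Phih.
Proof.
  intros U HU. apply open_local. intros z Uz.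
  destruct (nbH (fun y => U (Phih z ** y))) as [W [Wo [WS [WN WU]]]].
  { apply nbhd_open. apply open_tl; auto. rewrite g1r; auto. }
  destruct (Phih_KP z W Wo WS) as [n Hn].
  exists (fun y => Cl n (ginv z ** y)). split; [apply open_tl; auto; apply Cl_open|split].
  - rewrite gVl; apply Cl_sub.
  - intros z' Hz'. destruct (Phih_KP z' W Wo WS) as [n' Hn'].
    destruct (dense_Cl (max n n') z') as [f Hf].
    assert (A1 : W (ginv (Phih z) ** Phi f)).
    { apply Hn. replace (ginv z ** j f) with ((ginv z ** z') ** (ginv z' ** j f)) by (rewrite <- ga, gKl'; auto).
      apply Cl_sub; auto. apply (Cl_le n (max n n')); [lia|auto]. }
    assert (A2 : W (ginv (Phih z') ** Phi f)) by (apply Hn'; apply (Cl_le n' (max n n')); [lia|auto]).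
    replace (Phih z') with (Phih z ** ((ginv (Phih z) ** Phi f) ** ginv (ginv (Phih z') ** Phi f))).
    + apply WU. apply WS; auto. apply WS; auto.
    + rewrite ginvM, ginvK, !ga, gKr, gVr, g1l; auto.
Qed.

Lemma Phih_open (V : nat -> H -> Prop) : (forall n, gopen (V n)) -> (forall n, V n gone) ->
  (forall n v, V n v -> exists g, N n g /\ Phi g = v) -> open_map Phih.
Proof.
  intros Vo V1 HV U HU. apply open_local. intros y [z [Uz <-]].
  destruct (Cl_base (fun w => U (z ** w))) as [n Hn].
  { apply nbhd_open. apply open_tl; auto. rewrite g1r; auto. }
  exists (fun h => V n (ginv (Phih z) ** h)). split; [apply open_tl; auto|split].
  - rewrite gVl. apply V1.
  - intros h Hh. destruct (HV n _ Hh) as [g [Ng Pg]]. exists (z ** j g). split.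
    + apply Hn. apply Cl_j; auto.
    + rewrite Phih_hom, Phih_j, Pg, gKl'; auto.
Qed.
End Ext.
End Compl.

Lemma inv_le_iff (a b : R) : (0 < a)%R -> (0 < b)%R -> ((/ a <= / b)%R <-> (b <= a)%R).
Proof.
  intros Ha Hb; split; intros H.
  - destruct (Rle_or_lt b a) as [h|h]; auto. apply Rinv_0_lt_contravar in h; auto. lra.
  - apply Rinv_le_contravar; auto.
Qed.
Lemma inv_lt_iff (a b : R) : (0 < a)%R -> (0 < b)%R -> ((/ a < / b)%R <-> (b < a)%R).
Proof.
  intros Ha Hb; split; intros H.
  - destruct (Rle_or_lt a b) as [h|h]; auto. apply Rinv_le_contravar in h; auto. lra.
  - apply Rinv_0_lt_contravar; auto.
Qed.
Lemma INR1_pos n : (0 < INR n + 1)%R.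
Proof. pose proof (pos_INR n); lra. Qed.

Lemma least (P : nat -> Prop) : (exists n, P n) -> exists m, P m /\ forall k, k < m -> ~ P k.
Proof.
  intros [n Hn]. apply NNPP; intros Hno.
  assert (H : forall n k, k <= n -> ~ P k).
  { induction n0 as [|n0 IH]; intros k Hk Pk.
    - apply Hno. exists k; split; auto. intros; lia.
    - destruct (PeanoNat.Nat.eq_dec k (S n0)) as [->|ne]; [|apply (IH k); auto; lia].
      apply Hno. exists (S n0); split; auto. intros k Hk' Pk'. apply (IH k); auto; lia. }
  apply (H n n); auto.
Qed.

Definition dP (Q : nat -> Prop) : R :=
  match excluded_middle_informative (exists n, Q n) with
  | left H => (/ (INR (proj1_sig (constructive_indefinite_description _ (least Q H))) + 1))%R
  | right _ => 0%R end.

Lemma dP_cases Q : (dP Q = 0%R /\ forall n, ~ Q n) \/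
   exists m, dP Q = (/ (INR m + 1))%R /\ Q m /\ forall k, k < m -> ~ Q k.
Proof.
  unfold dP. destruct excluded_middle_informative as [H|H].
  - right. destruct constructive_indefinite_description as [m Hm]; simpl. exists m; auto.
  - left; split; auto. intros n Qn; apply H; eauto.
Qed.

Section Metric.
Context {G : TopGroup} {HT : is_topgroup G}.
Variable C : nat -> G -> Prop.
Hypothesis Csub : forall n, is_subgroup (C n).
Hypothesis Copen : forall n, gopen (C n).
Hypothesis Cdec : forall n x, C (S n) x -> C n x.
Hypothesis Cbase : forall V, nbhd_e V -> exists n, forall x, C n x -> V x.

Lemma Cle m n x : m <= n -> C n x -> C m x.
Proof. induction 1; auto. Qed.

Lemma Csep x : (forall n, C n x) -> x = gone.
Proof.
  intros H. apply NNPP; intros Nx.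
  destruct (hausd x gone Nx) as [U [V [HU [HV [Ux [Ve D]]]]]].
  destruct (Cbase V (nbhd_open V HV Ve)) as [n Hn]. apply (D x); auto.
Qed.

Definition dm (x y : G) : R := dP (fun n => ~ C n (ginv x ** y)).

Lemma dm_lt x y n : ((dm x y < / (INR n + 1))%R <-> C n (ginv x ** y)).
Proof.
  pose proof (INR1_pos n).
  unfold dm; destruct (dP_cases (fun n => ~ C n (ginv x ** y))) as [[E H0]|[m [E [Hm Hk]]]]; rewrite E.
  - split; intros _. apply NNPP, H0. apply Rinv_0_lt_compat; auto.
  - pose proof (INR1_pos m). rewrite inv_lt_iff by auto. split; intros H1.
    + apply NNPP, Hk. apply INR_lt. lra.
    + destruct (PeanoNat.Nat.lt_ge_cases n m) as [h|h].
      * apply lt_INR in h; lra.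
      * exfalso; apply Hm. apply (Cle m n); auto.
Qed.

Lemma dm_nonneg x y : (0 <= dm x y)%R.
Proof.
  unfold dm; destruct (dP_cases (fun n => ~ C n (ginv x ** y))) as [[E _]|[m [E _]]]; rewrite E.
  lra. left; apply Rinv_0_lt_compat, INR1_pos.
Qed.

Lemma dm_metrizable : metrizable G.
Proof.
  exists dm. split; [exact dm_nonneg|split; [|split; [|split]]].
  - intros x y; split.
    + unfold dm; destruct (dP_cases (fun n => ~ C n (ginv x ** y))) as [[E H0]|[m [E _]]]; rewrite E; intros Z.
      * apply gmul_eq1, Csep. intros n; apply NNPP, H0.
      * exfalso. pose proof (Rinv_0_lt_compat _ (INR1_pos m)). lra.
    + intros ->. unfold dm; destruct (dP_cases (fun n => ~ C n (ginv y ** y))) as [[E H0]|[m [E [Hm _]]]]; auto.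
      exfalso; apply Hm. rewrite gVl. apply Csub.
  - intros x y. unfold dm. f_equal. apply functional_extensionality; intros n.
    apply propositional_extensionality. split; intros H1 H2; apply H1.
    + rewrite <- (ginvK (ginv x ** y)), ginvM, ginvK. apply Csub; auto.
    + rewrite <- (ginvK (ginv y ** x)), ginvM, ginvK. apply Csub; auto.
  - intros x y z.
    assert (Hu : (dm x z <= Rmax (dm x y) (dm y z))%R).
    { destruct (Rle_or_lt (dm x z) (Rmax (dm x y) (dm y z))) as [h|h]; auto. exfalso.
      change (dm x z) with (dP (fun n => ~ C n (ginv x ** z))) in h.
      destruct (dP_cases (fun n => ~ C n (ginv x ** z))) as [[E _]|[m [E [Hm _]]]]; rewrite E in h.
      - pose proof (dm_nonneg x y); pose proof (Rmax_l (dm x y) (dm y z)). lra.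
      - apply Hm. replace (ginv x ** z) with ((ginv x ** y) ** (ginv y ** z)) by (rewrite <- ga, gKl'; auto).
        apply Csub; apply dm_lt.
        + pose proof (Rmax_l (dm x y) (dm y z)); lra.
        + pose proof (Rmax_r (dm x y) (dm y z)); lra. }
    pose proof (dm_nonneg x y); pose proof (dm_nonneg y z).
    unfold Rmax in Hu; destruct Rle_dec; lra.
  - intros U; split.
    + intros HU x Ux.
      destruct (Cbase (fun w => U (x ** w))) as [n Hn].
      { apply nbhd_open. apply open_tl; auto. rewrite g1r; auto. }
      exists (/ (INR n + 1))%R. split; [apply Rinv_0_lt_compat, INR1_pos|].
      intros y Hy. apply dm_lt in Hy. apply Hn in Hy. rewrite gKl' in Hy; auto.
    + intros H. apply open_local. intros x Ux. destruct (H x Ux) as [eps [Heps Hb]].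
      destruct (archimed_cor1 eps Heps) as [n [Hn Hn0]].
      exists (fun y => C n (ginv x ** y)). split; [apply open_tl; auto|split].
      * rewrite gVl; apply Csub.
      * intros y Hy. apply Hb. apply dm_lt in Hy.
        assert (INR n < INR n + 1)%R by lra.
        apply Rinv_0_lt_contravar in H0; [lra|]. apply lt_0_INR; auto.
Qed.
End Metric.

Definition epsi {T} (t0 : T) (P : T -> Prop) : T := epsilon (inhabits t0) P.
Lemma epsi_spec {T} (t0 : T) (P : T -> Prop) : (exists x, P x) -> P (epsi t0 P).
Proof. intros H; unfold epsi; apply epsilon_spec; auto. Qed.

Section Target.
Context {H : TopGroup} {HTH : is_topgroup H}.
Variables (K : Type) (k0 : K).
Hypothesis nbH : nb H.
Hypothesis metH : metrizable H.
Hypothesis compH : complete H.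
Hypothesis wH : weight_le H K.

Lemma sep_nb (a b : H) : (forall W, gopen W -> is_subgroup W -> normal W -> W (ginv a ** b)) -> a = b.
Proof.
  intros HW. apply NNPP; intros Nab.
  assert (N1 : ginv a ** b <> gone) by (intros E; apply Nab, gmul_eq1; auto).
  destruct (hausd _ _ N1) as [U [V [HU [HV [Uab [Ve D]]]]]].
  destruct (nbH V (nbhd_open V HV Ve)) as [W [Wo [WS [WN WV]]]].
  apply (D (ginv a ** b)); auto. apply WV, HW; auto.
Qed.

Lemma chain_exists : exists V : nat -> H -> Prop,
  (forall n, gopen (V n) /\ is_subgroup (V n) /\ normal (V n)) /\ (forall x, V 0 x) /\
  (forall n x, V (S n) x -> V n x) /\ (forall U, nbhd_e U -> exists n, forall x, V n x -> U x).
Proof.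
  destruct metH as [d [d0 [d1 [d2 [d3 dopen]]]]].
  set (ball := fun n y => (d gone y < / (INR n + 1))%R).
  assert (ballo : forall n, gopen (ball n)).
  { intros n. apply dopen. intros y Hy. exists (/ (INR n + 1) - d gone y)%R. split; [unfold ball in Hy; lra|].
    intros z Hz. unfold ball. pose proof (d3 gone y z). lra. }
  assert (balle : forall n, ball n gone).
  { intros n. unfold ball. rewrite (proj2 (d1 gone gone) eq_refl). apply Rinv_0_lt_compat, INR1_pos. }
  assert (HW : forall n, exists W, gopen W /\ is_subgroup W /\ normal W /\ forall x, W x -> ball n x).
  { intros n. apply nbH, nbhd_open; auto. }
  set (W := fun n => proj1_sig (constructive_indefinite_description _ (HW n))).
  assert (HW' : forall n, gopen (W n) /\ is_subgroup (W n) /\ normal (W n) /\ forall x, W n x -> ball n x).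
  { intros n; unfold W; destruct constructive_indefinite_description; simpl; auto. }
  set (V := fix V n := match n with 0 => fun _ : H => True | S n => fun x => V n x /\ W n x end).
  exists V. split; [|split; [simpl; auto|split]].
  - induction n as [|n IH]; simpl.
    + split; [apply open_true|split; [split; [auto|split; auto]|intros ? ? ?; auto]].
    + destruct IH as [IH1 [[IH2 [IH3 IH4]] IH5]]. destruct (HW' n) as [W1 [[W2 [W3 W4]] [W5 _]]].
      split; [apply open_and; auto|split; [split; [split; auto|split]|]].
      * intros x y [] []; split; auto.
      * intros x []; split; auto.
      * intros g x []; split; auto.
  - intros n x [H1 _]; auto.
  - intros U [O [HO [Oe OU]]]. destruct (dopen O) as [Hd _]. destruct (Hd HO gone Oe) as [eps [Heps Hb]].
    destruct (archimed_cor1 eps Heps) as [n [Hn Hn0]].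
    exists (S n). intros x [_ Wx]. apply OU, Hb. apply (proj2 (proj2 (proj2 (HW' n)))) in Wx. unfold ball in Wx.
    assert (INR n < INR n + 1)%R by lra. apply Rinv_0_lt_contravar in H0; [lra|]. apply lt_0_INR; auto.
Qed.

Section WithChain.
Variable V : nat -> H -> Prop.
Hypothesis HV : forall n, gopen (V n) /\ is_subgroup (V n) /\ normal (V n).
Hypothesis V0 : forall x, V 0 x.
Hypothesis Vdec : forall n x, V (S n) x -> V n x.
Hypothesis Vbase : forall U, nbhd_e U -> exists n, forall x, V n x -> U x.

Lemma V1 n : V n gone. Proof. apply HV. Qed.
Lemma VM n x y : V n x -> V n y -> V n (x ** y). Proof. apply HV. Qed.
Lemma VI n x : V n x -> V n (ginv x). Proof. apply HV. Qed.
Lemma VN n g x : V n x -> V n (g ** x ** ginv g). Proof. apply HV. Qed.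
Lemma Vle m n x : m <= n -> V n x -> V m x. Proof. induction 1; auto. Qed.
Lemma Vsep a b : (forall n, V n (ginv a ** b)) -> a = b.
Proof.
  intros Hn. apply NNPP; intros Nab.
  assert (N1 : ginv a ** b <> gone) by (intros E; apply Nab, gmul_eq1; auto).
  destruct (hausd _ _ N1) as [U [U' [HU [HU' [Uab [Ue D]]]]]].
  destruct (Vbase U' (nbhd_open U' HU' Ue)) as [n Hn']. apply (D (ginv a ** b)); auto.
Qed.

Definition sfun (n : nat) (k : K) : H :=
  match excluded_middle_informative (exists v, V n v /\ proj1_sig (constructive_indefinite_description _ wH) k v) with
  | left h => proj1_sig (constructive_indefinite_description _ h) | right _ => gone end.

Lemma sfun_V n k : V n (sfun n k).
Proof.
  unfold sfun. destruct excluded_middle_informative as [h|h]; [|apply V1].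
  exact (proj1 (proj2_sig (constructive_indefinite_description _ h))).
Qed.

Lemma sfun_surj n v : V n v -> exists k, V (S n) (ginv v ** sfun n k).
Proof.
  intros Vv. destruct (constructive_indefinite_description _ wH) as [B [Bo Bb]] eqn:EB.
  destruct (Bb (fun y => V (S n) (ginv v ** y)) v) as [k [Bkv Bk]].
  - apply open_tl; auto. apply HV.
  - rewrite gVl; apply V1.
  - exists k. unfold sfun. rewrite EB; simpl.
    destruct excluded_middle_informative as [h|h].
    + destruct (proj2_sig (constructive_indefinite_description _ h)) as [_ Bc]. apply Bk. exact Bc.
    + exfalso; apply h; exists v; auto.
Qed.

Fixpoint Pp (x : nat -> K) (n : nat) : H :=
  match n with 0 => gone | S n => Pp x n ** sfun n (x n) end.


Lemma Ptail x n m : n <= m -> V n (ginv (Pp x n) ** Pp x m).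
Proof.
  induction 1.
  - rewrite gVl; apply V1.
  - simpl. rewrite ga. apply VM; auto. eapply Vle; [eassumption|]. apply sfun_V.
Qed.

Lemma Pagree x y n : agree n x y -> Pp x n = Pp y n.
Proof.
  intros Ha. assert (forall k, k <= n -> Pp x k = Pp y k).
  { induction k; intros Hk; simpl; auto. rewrite IHk by lia. rewrite (Ha k) by lia; auto. }
  auto.
Qed.

Lemma lim_exists x : exists L, forall n, V n (ginv (Pp x n) ** L).
Proof.
  set (Fl := fun A : H -> Prop => exists m, forall k, m <= k -> A (Pp x k)).
  assert (PF : proper_filter Fl).
  { split; [exists 0; auto|split; [|split]].
    - intros [m Hm]. apply (Hm m); auto.
    - intros A B [m1 H1] [m2 H2]. exists (max m1 m2). intros k Hk; split; [apply H1|apply H2]; lia.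
    - intros A B AB [m Hm]. exists m; auto. }
  assert (CF : cauchy_filter Fl).
  { intros U HU. destruct (Vbase U HU) as [n Hn].
    exists (fun z => exists k, n <= k /\ z = Pp x k). split; [exists n; intros k Hk; exists k; auto|].
    intros a b [k [Hk ->]] [l [Hl ->]].
    assert (E : V n (ginv (Pp x k) ** Pp x l)).
    { replace (ginv (Pp x k) ** Pp x l) with (ginv (ginv (Pp x n) ** Pp x k) ** (ginv (Pp x n) ** Pp x l)).
      - apply VM; [apply VI|]; apply Ptail; auto.
      - rewrite ginvM, ginvK, <- ga, gKl'; auto. }
    split; apply Hn; auto. unfold ent_right.
    replace (Pp x l ** ginv (Pp x k)) with (Pp x k ** (ginv (Pp x k) ** Pp x l) ** ginv (Pp x k)); [apply VN; auto|].
    rewrite gKl'; auto. }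
  destruct (compH Fl PF CF) as [L HL]. exists L. intros n.
  destruct (HL (fun y => V n (ginv L ** y))) as [m Hm].
  - apply open_tl; auto. apply HV.
  - rewrite gVl; apply V1.
  - specialize (Hm (max m n) ltac:(lia)). simpl in Hm.
    replace (ginv (Pp x n) ** L) with ((ginv (Pp x n) ** Pp x (max m n)) ** ginv (ginv L ** Pp x (max m n))).
    + apply VM; [apply Ptail; lia| apply VI; auto].
    + rewrite ginvM, ginvK, ga, gKr; auto.
Qed.

Definition ff (x : nat -> K) : H := epsi gone (fun L => forall n, V n (ginv (Pp x n) ** L)).
Lemma ff_spec x n : V n (ginv (Pp x n) ** ff x).
Proof. unfold ff. revert n. apply (epsi_spec gone (fun L => forall n, V n (ginv (Pp x n) ** L))). apply lim_exists. Qed.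
Lemma ff_uniq x L : (forall n, V n (ginv (Pp x n) ** L)) -> ff x = L.
Proof.
  intros HL. apply Vsep. intros n.
  replace (ginv (ff x) ** L) with (ginv (ginv (Pp x n) ** ff x) ** (ginv (Pp x n) ** L)).
  - apply VM; [apply VI, ff_spec| auto].
  - rewrite ginvM, ginvK, <- ga, gKl'; auto.
Qed.

Lemma ff_unif : unif_cont_from_power ff.
Proof.
  intros U HU. destruct (Vbase U HU) as [n Hn]. exists n. intros x y Hxy.
  assert (E : V n (ginv (ff x) ** ff y)).
  { replace (ginv (ff x) ** ff y) with (ginv (ginv (Pp x n) ** ff x) ** (ginv (Pp x n) ** ff y)).
    - apply VM; [apply VI, ff_spec|]. rewrite (Pagree x y n Hxy). apply ff_spec.
    - rewrite ginvM, ginvK, <- ga, gKl'; auto. }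
  split; apply Hn; auto. unfold ent_right.
  replace (ff y ** ginv (ff x)) with (ff x ** (ginv (ff x) ** ff y) ** ginv (ff x)); [apply VN; auto|].
  rewrite gKl'; auto.
Qed.

Definition ch (m : nat) (r : H) : K := epsi k0 (fun k => V (S m) (ginv r ** sfun m k)).
Lemma ch_spec m r : V m r -> V (S m) (ginv r ** sfun m (ch m r)).
Proof. intros Vr. unfold ch. apply (epsi_spec k0 (fun k => V (S m) (ginv r ** sfun m k))). apply sfun_surj; auto. Qed.

Lemma realize n x w : V n w -> exists y, agree n x y /\ ff y = Pp x n ** w.
Proof.
  intros Vw.
  set (R := fix R t := match t with 0 => w | S t => ginv (sfun (n + t) (ch (n + t) (R t))) ** R t end).
  set (y := fun k => if Nat.ltb k n then x k else ch k (R (k - n))).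
  assert (Ha : agree n x y).
  { intros k Hk. unfold y. destruct (Nat.ltb_spec k n); auto; lia. }
  assert (yt : forall t, y (n + t) = ch (n + t) (R t)).
  { intros t. unfold y. destruct (Nat.ltb_spec (n + t) n); [lia|]. f_equal. f_equal. lia. }
  assert (Inv : forall t, V (n + t) (R t) /\ Pp y (n + t) ** R t = Pp x n ** w).
  { induction t as [|t [IH1 IH2]].
    - rewrite PeanoNat.Nat.add_0_r. simpl. split; auto. rewrite (Pagree x y n Ha); auto.
    - rewrite PeanoNat.Nat.add_succ_r. simpl. rewrite yt. split.
      + rewrite <- (ginvK (R t)) at 2. rewrite <- ginvM. apply VI. apply ch_spec; auto.
      + rewrite <- IH2. rewrite <- ga, gKl'. auto. }
  exists y; split; auto. apply ff_uniq. intros k.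
  destruct (PeanoNat.Nat.le_gt_cases n k) as [h|h].
  - replace k with (n + (k - n)) by lia. destruct (Inv (k - n)) as [I1 I2].
    rewrite <- I2, gKl; auto.
  - rewrite (Pagree x y n Ha).
    replace (ginv (Pp y k) ** (Pp y n ** w)) with ((ginv (Pp y k) ** Pp y n) ** w) by (rewrite ga; auto).
    apply VM. apply Ptail; lia. apply (Vle k n); [lia|auto].
Qed.

Lemma ff_surj h : exists x, ff x = h.
Proof.
  destruct (realize 0 (fun _ => k0) h (V0 h)) as [y [_ E]]. exists y. rewrite E; simpl; apply g1l.
Qed.

Lemma ff_diff n v : V n v -> exists x y, agree n x y /\ ginv (ff x) ** ff y = v.
Proof.
  intros Vv. set (x := fun _ : nat => k0).
  destruct (realize n x (ginv (Pp x n) ** ff x ** v)) as [y [Ha E]].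
  - apply VM; auto. apply ff_spec.
  - exists x, y; split; auto. rewrite E, !ga, gKr, gVl, g1l; auto.
Qed.
End WithChain.
End Target.

Section Main.
Variables (K : Type) (HK : infinite_type K) (Omega : TopGroup -> Prop).
Hypothesis O1 : forall G, Omega G -> is_topgroup G /\ nb G.
Hypothesis O2 : forall G P SP, Omega G -> Omega (SubTG G P SP).
Hypothesis O3 : forall G N, Omega G -> (forall n, is_subgroup (N n) /\ normal (N n)) ->
  (forall n x, N (S n) x -> N n x) -> (forall x, (forall n, N n x) -> x = gone) -> Omega (ChainTG G N).
Hypothesis O4 : forall F Fh j, Omega F -> is_completion F Fh j -> nb Fh -> Omega Fh.

Theorem main_gen : forall (F : TopGroup) (i : (nat -> K) -> F) (Fh : TopGroup) (j : F -> Fh),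
  @is_free_over_power Omega K F i -> is_completion F Fh j ->
  surjectively_universal (fun H => Omega H /\ metr_complete_weight K H) Fh.
Proof.
  intros F i Fh j Hfree Hc.
  assert (IK : inhabited K).
  { destruct (classic (inhabited K)) as [IK|NK]; auto.
    exfalso; apply HK; exists nil; intros x; apply NK; constructor; auto. }
  destruct IK as [k0].
  pose proof (proj1 Hfree) as OF. destruct (O1 F OF) as [HTF nbF].
  set (N := Ngen K F i).
  pose proof (N_sub K F i) as NS. pose proof (N_dec K F i) as Nd.
  pose proof (@N_base K Omega O1 F i Hfree) as Nbs. pose proof (@N_open K Omega O1 O2 O3 F i Hfree) as No.
  pose proof (proj1 Hc) as HTh.
  pose proof (@Cl_nb F Fh j N HTF Hc NS No Nbs) as nbh.
  split.
  - split; [apply (O4 F Fh j); auto|]. split; [|split].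
    + apply (@dm_metrizable Fh HTh (Cl F Fh j N)).
      * intros n; apply (@Cl_sub F Fh j N HTF Hc NS).
      * intros n; apply (@Cl_open F Fh j N HTF Hc NS No).
      * intros n; apply (@Cl_dec F Fh j N Nd).
      * apply (@Cl_base F Fh j N HTF Hc Nbs).
    + apply Hc.
    + destruct (index_surj K HK) as [sur Hsur].
      exists (fun k => let (n, w) := sur k in fun z => Cl F Fh j N n (ginv (j (word K F i k0 w)) ** z)).
      split.
      * intros k. destruct (sur k) as [n w]. apply open_tl; auto. apply (@Cl_open F Fh j N HTF Hc NS No).
      * intros U z HU Uz.
        destruct (@Cl_base F Fh j N HTF Hc Nbs (fun c => U (z ** c))) as [n Hn].
        { apply nbhd_open. apply open_tl; auto. rewrite g1r; auto. }
        destruct (@jdense F Fh j Hc (fun y => Cl F Fh j N n (ginv z ** y))) as [f Hf].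
        { apply open_tl; auto. apply (@Cl_open F Fh j N HTF Hc NS No). }
        { exists z. rewrite gVl. apply (@Cl_sub F Fh j N HTF Hc NS). }
        destruct (@gen_word K Omega O1 O2 F i Hfree k0 n f) as [w Hw].
        destruct (Hsur (n, w)) as [k Hk]. exists k. rewrite Hk.
        assert (Hjw : Cl F Fh j N n (ginv z ** j (word K F i k0 w))).
        { replace (ginv z ** j (word K F i k0 w)) with ((ginv z ** j f) ** j (ginv f ** word K F i k0 w)).
          - apply (@Cl_sub F Fh j N HTF Hc NS); auto. apply (@Cl_j F Fh j N HTF Hc NS No); auto.
          - rewrite (@jM F Fh j Hc), (@jV F Fh j HTF Hc), <- ga, gKl'; auto. }
        split.
        -- rewrite <- (ginvK z), <- ginvM. apply (@Cl_sub F Fh j N HTF Hc NS); auto.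
        -- intros y Hy. replace y with (z ** ((ginv z ** j (word K F i k0 w)) ** (ginv (j (word K F i k0 w)) ** y))).
           ++ apply Hn. apply (@Cl_sub F Fh j N HTF Hc NS); auto.
           ++ rewrite <- ga, gKl', gKl'; auto.
  - intros H [OH [metH [compH wH]]]. destruct (O1 H OH) as [HTH nbH].
    destruct (@chain_exists H HTH nbH metH) as [V [HV [V0 [Vdec Vbase]]]].
    set (f := ff K wH V).
    pose proof (@ff_unif H HTH K compH wH V HV Vdec Vbase) as Hu.
    destruct (proj2 (proj2 Hfree) H f OH Hu) as [[Phi [Phom [Pcont Pf]]] _].
    exists (Phih F Fh j N H Phi). split; [|split; [|split]].
    + apply (@Phih_hom F Fh j N HTF Hc NS Nd No Nbs H Phi HTH nbH compH Phom Pcont).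
    + apply (@Phih_cont F Fh j N HTF Hc NS Nd No Nbs H Phi HTH nbH compH Phom Pcont).
    + apply (@Phih_open F Fh j N HTF Hc NS Nd No Nbs H Phi HTH nbH compH Phom Pcont V).
      * intros n; apply HV.
      * intros n; apply HV.
      * intros n v Vv. destruct (@ff_diff H HTH K k0 compH wH V HV Vdec Vbase n v Vv) as [x [y [Ha E]]].
        exists (ginv (i x) ** i y). split; [apply Nb; auto|].
        rewrite Phom, (homV F H Phi (tg_group HTF) (tg_group HTH) Phom), !Pf. exact E.
    + intros h. destruct (@ff_surj H HTH K k0 compH wH V HV V0 Vdec Vbase h) as [x Hx].
      exists (j (i x)). rewrite (@Phih_j F Fh j N HTF Hc NS Nd No Nbs H Phi HTH nbH compH Phom Pcont).
      rewrite Pf. exact Hx.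
Qed.
End Main.

Lemma bal_O1 G : balanced_NA G -> is_topgroup G /\ nb G.
Proof. intros [HT [HNA Hb]]. split; auto. apply nb_of_NA_bal; auto. Qed.
Lemma ab_O1 G : abelian_NA G -> is_topgroup G /\ nb G.
Proof. intros [HT [HNA Hb]]. split; auto. apply nb_of_NA_ab; auto. Qed.
Lemma bool_O1 G : boolean_NA G -> is_topgroup G /\ nb G.
Proof. intros [HT [HNA Hb]]. split; auto. apply nb_of_NA_ab; auto. apply bool_ab; auto. Qed.

Lemma sub_tg_nb G P SP : is_topgroup G -> nb G -> is_topgroup (SubTG G P SP) /\ nb (SubTG G P SP).
Proof. intros HT Hnb. exact (conj (sub_topgroup G P SP) (sub_nb G P SP Hnb)). Qed.

Lemma chain_tg_nb G N : is_topgroup G -> (forall n, is_subgroup (N n) /\ normal (N n)) ->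
  (forall n x, N (S n) x -> N n x) -> (forall x, (forall n, N n x) -> x = gone) ->
  is_topgroup (ChainTG G N) /\ nb (ChainTG G N).
Proof.
  intros HT HN Hd Hs. exact (conj (chain_topgroup G N HN Hd Hs) (chain_nb G N HN)).
Qed.

Theorem theorem6p4 (K : Type) (HK : infinite_type K) :
  (forall (F : TopGroup) (i : (nat -> K) -> F) (Fh : TopGroup) (j : F -> Fh),
     is_free_over_power balanced_NA i -> is_completion F Fh j ->
     surjectively_universal
       (fun H => balanced_NA H /\ metr_complete_weight K H) Fh) /\
  (forall (F : TopGroup) (i : (nat -> K) -> F) (Fh : TopGroup) (j : F -> Fh),
     is_free_over_power abelian_NA i -> is_completion F Fh j ->
     surjectively_universal
       (fun H => abelian_NA H /\ metr_complete_weight K H) Fh) /\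
  (forall (F : TopGroup) (i : (nat -> K) -> F) (Fh : TopGroup) (j : F -> Fh),
     is_free_over_power boolean_NA i -> is_completion F Fh j ->
     surjectively_universal
       (fun H => boolean_NA H /\ metr_complete_weight K H) Fh).
Proof.
  split; [|split]; apply main_gen; auto.
  - exact bal_O1.
  - intros G P SP OG. destruct (bal_O1 G OG) as [HT Hnb]. destruct (sub_tg_nb G P SP HT Hnb) as [H1 H2].
    split; auto. split; [apply nb_NA|apply nb_bal]; auto.
  - intros G N OG HN Hd Hs. destruct (bal_O1 G OG) as [HT Hnb]. destruct (chain_tg_nb G N HT HN Hd Hs) as [H1 H2].
    split; auto. split; [apply nb_NA|apply nb_bal]; auto.
  - intros F Fh j OF Hc Hnb. assert (HT : is_topgroup Fh) by apply Hc. split; auto. split; [apply nb_NA|apply nb_bal]; auto.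
  - exact ab_O1.
  - intros G P SP OG. destruct (ab_O1 G OG) as [HT Hnb]. destruct (sub_tg_nb G P SP HT Hnb) as [H1 H2].
    split; auto. split; [apply nb_NA; auto|]. apply sub_ab. apply OG.
  - intros G N OG HN Hd Hs. destruct (ab_O1 G OG) as [HT Hnb]. destruct (chain_tg_nb G N HT HN Hd Hs) as [H1 H2].
    split; auto. split; [apply nb_NA; auto|]. exact (proj2 (proj2 OG)).
  - intros F Fh j OF Hc Hnb. assert (HT : is_topgroup Fh) by apply Hc. split; auto. split; [apply nb_NA; auto|].
    apply (compl_ab F Fh j Hc). apply OF.
  - exact bool_O1.
  - intros G P SP OG. destruct (bool_O1 G OG) as [HT Hnb]. destruct (sub_tg_nb G P SP HT Hnb) as [H1 H2].
    split; auto. split; [apply nb_NA; auto|]. apply sub_bool; auto. apply OG.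
  - intros G N OG HN Hd Hs. destruct (bool_O1 G OG) as [HT Hnb]. destruct (chain_tg_nb G N HT HN Hd Hs) as [H1 H2].
    split; auto. split; [apply nb_NA; auto|]. exact (proj2 (proj2 OG)).
  - intros F Fh j OF Hc Hnb. assert (HT : is_topgroup Fh) by apply Hc. split; auto. split; [apply nb_NA; auto|].
    assert (HTF : is_topgroup F) by apply OF. apply (compl_bool F Fh j Hc). apply OF.
Qed.
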